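(* The algorithm $\mathcal{U}$ described in the context is linearizable with respect to $\mathcal{T}$: every history $H$ of $\mathcal{U}$ has a completion $H'$ and a linearization of $H'$ that conforms to $\mathcal{T}$.
   Context: Model: an asynchronous shared-memory system with possibly infinitely many processes, any of which may crash, communicating via atomic shared objects. A fetch-and-increment (F\&I) object stores an integer; F\&I$(C)$ atomically returns the current value and increments it. A generalized-compare-and-swap (GCAS) object $O$ stores a value and supports Read$(O)$ and GCAS$(c, O, v_1, v_2)$, which atomically does: if $c(\text{current value of } O, v_1)$ holds then set $O := v_2$ and return true, else return false. Tuples are compared componentwise for $=$; GCAS$(>, A, (t,-,-), v)$ succeeds iff the time field of $A$ is strictly greater than $t$. Implemented type $\mathcal{T} = (OP, RES, Q, \delta)$ with $\delta \subseteq Q\times OP\times Q\times RES$ and initial state $s_0$; a procedure $apply_{\mathcal{T}}(o,s)$ returns some $(s',r)$ with $(s,o,s',r)\in\delta$. $NULL$ is a value different from every response of $\mathcal{T}$, and $NOOP$ is a name different from every operation of $\mathcal{T}$. Algorithm $\mathcal{U}$: each process $p$ owns a GCAS object $H_p$ with fields $(time, response)$. Shared objects: F\&I object $C$, initially $1$; GCAS object $A$ with fields $(time, op, ptr)$, initially $(0, NOOP, h(NOOP))$, where $h(NOOP)$ is a pointer to an immutable location containing $(0,\perp)$; GCAS object $S$ with fields $(time, state, response, ptr)$, initially $(0, s_0, \perp, h(NOOP))$. Process $p$ performs operation $o$ by calling DoOp$(o)$: (1) DoOp$(o)$ invoked; (2) $t := $ F\&I$(C)$; (3) $H_p := (t,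 NULL)$; (4) while $H_p = (t, NULL)$ do: (5) $(t^*, s^*, r^*, roptr^* ) := S$; (6) GCAS$(=, *roptr^*, (t^*, NULL), (t^*, r^* ))$; (7) GCAS$(>, A, (t,-,-), (t, o, \&H_p))$; (8) $(t', o', roptr') := A$; (9) $(\hat t, \hat r) := *roptr'$; (10) if $(\hat t,\hat r) = (t', NULL)$ then (11) $(s', r') := apply_{\mathcal{T}}(o', s^* )$; (12) GCAS$(=, S, (t^*,s^*,r^*,roptr^* ), (t', s', r', roptr'))$; (13) else GCAS$(=, A, (t', o', roptr'), (t, o, \&H_p))$; end while; (14) return $H_p.response$. Lines 1 and 14 are the invocation and response steps. Linearizability: a history is the subsequence of invocation/response steps of an execution; an operation execution is complete if its response appears, pending otherwise. A completion $H'$ of $H$ removes some pending invocations and adds responses to all others so every operation is complete. A linearization of a complete history assigns each operation a distinct point within its invocation–response interval; it conforms to $\mathcal{T}$ if the responses are those obtained by applying the operations sequentially in that order starting from $s_0$ according to $\delta$. *)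

(* Defs.v *)
From Stdlib Require Import List Arith QArith.
Local Open Scope nat_scope.
Import ListNotations.

Set Implicit Arguments.

Section Model.

(* The implemented type T = (OP, RES, St, delta) with initial state s0. *)
Context (OP RES St : Type) (delta : St -> OP -> St -> RES -> Prop) (s0 : St).

(* Processes are identified by natural numbers (possibly infinitely many). *)
Definition proc := nat.

Inductive rval : Type := RNull | RBot | RVal (r : RES).

(* A pointer: either &H_p for a process p, or h(NOOP) (= None), the pointer to
   an immutable location containing (0, ⊥). *)
Definition ptr := option proc.

(* Operation field of A: None stands for NOOP. *)
Definition aval := (nat * option OP * ptr)%type.           (* (time, op, ptr) *)
Definition sval := (nat * St * rval * ptr)%type.           (* (time, state, response, ptr) *)
Definition hval := (nat * rval)%type.                      (* (time, response) *)

(* Program counter / local variables of a process. AtN means "about to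
   execute line N" with the current values of the local variables. *)
Inductive pcst : Type :=
| Idle
| At2 (o : OP)
| At3 (o : OP) (t : nat)
| At4 (o : OP) (t : nat)
| At5 (o : OP) (t : nat)
| At6 (o : OP) (t : nat) (sv : sval)
| At7 (o : OP) (t : nat) (sv : sval)
| At8 (o : OP) (t : nat) (sv : sval)
| At9 (o : OP) (t : nat) (sv : sval) (av : aval)
| At12 (o : OP) (t : nat) (sv : sval) (av : aval) (s' : St) (r' : RES)
| At13 (o : OP) (t : nat) (sv : sval) (av : aval)
| At14 (o : OP) (t : nat).

Record config : Type := Config {
  cC : nat;
  cA : aval;
  cS : sval;
  cH : proc -> hval;
  cpc : proc -> pcst
}.

Definition init_config : config :=
  Config 1 (0, None, None) (0, s0, RBot, None) (fun _ => (0, RBot)) (fun _ => Idle).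

Definition upd {X : Type} (f : proc -> X) (p : proc) (x : X) : proc -> X :=
  fun q => if Nat.eqb q p then x else f q.

Definition deref (H : proc -> hval) (q : ptr) : hval :=
  match q with None => (0, RBot) | Some p => H p end.

Inductive ev : Type := EInv (o : OP) | EResp (v : rval).

Definition set_pc (c : config) (p : proc) (x : pcst) : config :=
  Config (cC c) (cA c) (cS c) (cH c) (upd (cpc c) p x).

Inductive ustep : config -> proc -> option ev -> config -> Prop :=
| st1 c p o : cpc c p = Idle ->
    ustep c p (Some (EInv o)) (set_pc c p (At2 o))
(* line 2: t := F&I(C) *)
| st2 c p o : cpc c p = At2 o ->
    ustep c p None
      (Config (S (cC c)) (cA c) (cS c) (cH c) (upd (cpc c) p (At3 o (cC c))))
| st3 c p o t : cpc c p = At3 o t ->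
    ustep c p None
      (Config (cC c) (cA c) (cS c) (upd (cH c) p (t, RNull)) (upd (cpc c) p (At4 o t)))
| st4_loop c p o t : cpc c p = At4 o t -> cH c p = (t, RNull) ->
    ustep c p None (set_pc c p (At5 o t))
| st4_exit c p o t : cpc c p = At4 o t -> cH c p <> (t, RNull) ->
    ustep c p None (set_pc c p (At14 o t))
| st5 c p o t : cpc c p = At5 o t ->
    ustep c p None (set_pc c p (At6 o t (cS c)))
(* line 6: GCAS(=, deref roptr_s, (t_s, NULL), (t_s, r_s)) *)
| st6_succ c p o t ts ss rs q : cpc c p = At6 o t (ts, ss, rs, Some q) ->
    cH c q = (ts, RNull) ->
    ustep c p None
      (Config (cC c) (cA c) (cS c) (upd (cH c) q (ts, rs))
              (upd (cpc c) p (At7 o t (ts, ss, rs, Some q))))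
| st6_fail c p o t ts ss rs q : cpc c p = At6 o t (ts, ss, rs, q) ->
    deref (cH c) q <> (ts, RNull) ->
    ustep c p None (set_pc c p (At7 o t (ts, ss, rs, q)))
(* line 7: GCAS(>, A, (t,-,-), (t, o, &H_p)) *)
| st7_succ c p o t sv : cpc c p = At7 o t sv -> t < fst (fst (cA c)) ->
    ustep c p None
      (Config (cC c) (t, Some o, Some p) (cS c) (cH c) (upd (cpc c) p (At8 o t sv)))
| st7_fail c p o t sv : cpc c p = At7 o t sv -> ~ t < fst (fst (cA c)) ->
    ustep c p None (set_pc c p (At8 o t sv))
| st8 c p o t sv : cpc c p = At8 o t sv ->
    ustep c p None (set_pc c p (At9 o t sv (cA c)))
(* lines 9-11: read deref roptr_a; test; apply_T (any (s',r') allowed by delta) *)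
| st9_apply c p o t ts ss rs qs ta oa qa s' r' :
    cpc c p = At9 o t (ts, ss, rs, qs) (ta, Some oa, qa) ->
    deref (cH c) qa = (ta, RNull) ->
    delta ss oa s' r' ->
    ustep c p None (set_pc c p (At12 o t (ts, ss, rs, qs) (ta, Some oa, qa) s' r'))
| st9_else c p o t sv ta oa qa :
    cpc c p = At9 o t sv (ta, oa, qa) ->
    deref (cH c) qa <> (ta, RNull) ->
    ustep c p None (set_pc c p (At13 o t sv (ta, oa, qa)))
(* line 12: GCAS(=, S, (t_s,s_s,r_s,roptr_s), (t', s', r', roptr')) *)
| st12_succ c p o t sv ta oa qa s' r' :
    cpc c p = At12 o t sv (ta, oa, qa) s' r' -> cS c = sv ->
    ustep c p None
      (Config (cC c) (cA c) (ta, s', RVal r', qa) (cH c) (upd (cpc c) p (At4 o t)))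
| st12_fail c p o t sv av s' r' :
    cpc c p = At12 o t sv av s' r' -> cS c <> sv ->
    ustep c p None (set_pc c p (At4 o t))
(* line 13: GCAS(=, A, (t', o', roptr'), (t, o, &H_p)) *)
| st13_succ c p o t sv av : cpc c p = At13 o t sv av -> cA c = av ->
    ustep c p None
      (Config (cC c) (t, Some o, Some p) (cS c) (cH c) (upd (cpc c) p (At4 o t)))
| st13_fail c p o t sv av : cpc c p = At13 o t sv av -> cA c <> av ->
    ustep c p None (set_pc c p (At4 o t))
| st14 c p o t : cpc c p = At14 o t ->
    ustep c p (Some (EResp (snd (cH c p)))) (set_pc c p Idle).

(* Finite executions from the initial configuration, as traces of steps.
   A process that stops taking steps has crashed. *)
Inductive reach : list (proc * option ev) -> config -> Prop :=
| reach_nil : reach [] init_config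
| reach_step tr c p l c' : reach tr c -> ustep c p l c' ->
    reach (tr ++ [(p, l)]) c'.

Definition history (tr : list (proc * option ev)) : list (proc * ev) :=
  flat_map (fun x => match snd x with Some e => [(fst x, e)] | None => [] end) tr.

Definition is_inv (h : list (proc * ev)) (i : nat) : Prop :=
  exists p o, nth_error h i = Some (p, EInv o).

Definition resp_of (h : list (proc * ev)) (i j : nat) : Prop :=
  i < j /\
  exists p o v, nth_error h i = Some (p, EInv o) /\
    nth_error h j = Some (p, EResp v) /\
    forall k q e, i < k -> k < j -> nth_error h k = Some (q, e) -> q <> p.

Definition pending (h : list (proc * ev)) (i : nat) : Prop :=
  is_inv h i /\ ~ exists j, resp_of h i j.

Definition complete (h : list (proc * ev)) : Prop :=
  forall i, is_inv h i -> exists j, resp_of h i j.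

Fixpoint alternating (expect_inv : bool) (l : list ev) : Prop :=
  match l with
  | [] => True
  | EInv _ :: l' => expect_inv = true /\ alternating false l'
  | EResp _ :: l' => expect_inv = false /\ alternating true l'
  end.

Definition well_formed (h : list (proc * ev)) : Prop :=
  forall p, alternating true (map snd (filter (fun x => Nat.eqb (fst x) p) h)).

Definition is_completion (h h' : list (proc * ev)) : Prop :=
  exists (keep : nat -> bool) (E : list (proc * RES)),
    (forall i, i < length h -> keep i = false -> pending h i) /\
    h' = map snd (filter (fun ix => keep (fst ix)) (combine (seq 0 (length h)) h))
         ++ map (fun pr => (fst pr, EResp (RVal (snd pr)))) E /\
    well_formed h' /\ complete h'.

Definition qtime (n : nat) : Q := inject_Z (Z.of_nat n).

(* A linearization of the complete history h conforming to T: the operations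
   (identified by their invocation positions), listed in the order of their
   distinct linearization points pt, each point lying within the operation's
   invocation-response interval (positions of h serve as times), and the
   responses are those of a sequential application from s0 according to delta. *)
Definition linearizable_conforming (h : list (proc * ev)) : Prop :=
  exists (L : list nat) (pt : nat -> Q) (st : nat -> St),
    NoDup L /\
    (forall i, In i L <-> is_inv h i) /\
    (forall k, S k < length L -> Qlt (pt (nth k L 0)) (pt (nth (S k) L 0))) /\
    st 0 = s0 /\
    forall k, k < length L ->
      exists j p o r,
        resp_of h (nth k L 0) j /\
        nth_error h (nth k L 0) = Some (p, EInv o) /\
        nth_error h j = Some (p, EResp (RVal r)) /\
        Qle (qtime (nth k L 0)) (pt (nth k L 0)) /\ Qle (pt (nth k L 0)) (qtime j) /\
        delta (st k) o (st (S k)) r.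

End Model.

(* Main.v *)
Require Import Defs.
From Stdlib Require Import List Arith QArith Lia Lqa ClassicalEpsilon Permutation.
Import ListNotations.
Local Open Scope nat_scope.

Section PA.
Context (OP RES St : Type) (delta : St -> OP -> St -> RES -> Prop) (s0 : St).
Notation evt := (ev OP RES).

Definition proj (p : proc) (h : list (proc * evt)) : list evt :=
  map snd (filter (fun x => Nat.eqb (fst x) p) h).

Lemma proj_app p l1 l2 : proj p (l1 ++ l2) = proj p l1 ++ proj p l2.
Proof. unfold proj. rewrite filter_app, map_app. reflexivity. Qed.

Lemma proj_cons_eq p e l : proj p ((p, e) :: l) = e :: proj p l.
Proof. unfold proj. simpl. rewrite Nat.eqb_refl. reflexivity. Qed.

Lemma proj_cons_neq p q e l : q <> p -> proj p ((q, e) :: l) = proj p l.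
Proof. intros H. unfold proj. simpl. apply Nat.eqb_neq in H. rewrite H. reflexivity. Qed.

Lemma proj_nil_of p l : (forall x, In x l -> fst x <> p) -> proj p l = [].
Proof.
  induction l as [|[q e] l IH]; intros H; [reflexivity|].
  rewrite proj_cons_neq. apply IH. intros x Hx. apply H. right; auto.
  apply (H (q,e)). left; auto.
Qed.

Lemma alt_two_inv b (l1 : list evt) o1 o2 (l2 : list evt) :
  alternating b (l1 ++ EInv RES o1 :: EInv RES o2 :: l2) -> False.
Proof.
  revert b. induction l1 as [|e l1 IH]; intros b H.
  - simpl in H. destruct H as [H1 [H2 _]]. subst. discriminate.
  - simpl in H. destruct e; destruct H as [_ H]; eapply IH; eauto.
Qed.

Lemma alt_prefix b (l1 l2 : list evt) : alternating b (l1 ++ l2) -> alternating b l1.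
Proof.
  revert b. induction l1 as [|e l1 IH]; intros b H; simpl; auto.
  simpl in H. destruct e; destruct H; split; eauto.
Qed.

Lemma alt_resp_after_inv b (l1 : list evt) o v :
  alternating b (l1 ++ [EInv RES o]) -> alternating b (l1 ++ [EInv RES o; EResp OP v]).
Proof.
  revert b. induction l1 as [|e l1 IH]; intros b H; simpl in *.
  - destruct H. auto.
  - destruct e; destruct H; split; auto.
Qed.

Lemma min_exists (P : nat -> Prop) : (exists n, P n) -> exists n, P n /\ forall m, m < n -> ~ P m.
Proof.
  intros [n Hn]. revert Hn. induction n as [n IH] using lt_wf_ind. intros Hn.
  destruct (classic (exists m, m < n /\ P m)) as [[m [Hm1 Hm2]]|Hno].
  - apply (IH m Hm1 Hm2).
  - exists n. split; auto. intros m Hm HP. apply Hno. eauto.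
Qed.

Lemma nthsplit {A} (l : list A) i a : nth_error l i = Some a ->
  l = firstn i l ++ a :: skipn (S i) l /\ length (firstn i l) = i.
Proof.
  revert i. induction l as [|b l IH]; intros i H; destruct i; simpl in *; try discriminate.
  - inversion H; subst. auto.
  - destruct (IH i H) as [H1 H2]. split; [f_equal; auto| lia].
Qed.

Lemma pend_no_later (h : list (proc * evt)) i p o :
  well_formed h -> nth_error h i = Some (p, EInv RES o) -> ~ (exists j, resp_of h i j) ->
  forall x q e, i < x -> nth_error h x = Some (q, e) -> q <> p.
Proof.
  intros WF Hi Hnr x q e Hx Hxe Hqp. subst q.
  destruct (min_exists (fun x => i < x /\ exists e, nth_error h x = Some (p, e)))
    as [y [[Hy [e' Hye]] Hmin]]; [eauto|].
  destruct e' as [o'|v].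
  -
    destruct (nthsplit h i _ Hi) as [Hs1 Hl1].
    set (l1 := firstn i h) in *. set (l2 := skipn (S i) h) in *.
    assert (Hy2 : nth_error l2 (y - S i) = Some (p, EInv RES o')).
    { rewrite Hs1 in Hye. rewrite nth_error_app2 in Hye by lia.
      replace (y - length l1) with (S (y - S i)) in Hye by lia. simpl in Hye. exact Hye. }
    destruct (nthsplit l2 _ _ Hy2) as [Hs2 Hl2].
    set (l3 := firstn (y - S i) l2) in *. set (l4 := skipn (S (y - S i)) l2) in *.
    assert (Hp3 : proj p l3 = []).
    { apply proj_nil_of. intros [q e1] Hin Hq. simpl in Hq. subst q.
      destruct (In_nth_error _ _ Hin) as [z Hz].
      assert (Hzl : z < length l3) by (apply nth_error_Some; congruence).
      apply (Hmin (S i + z)). lia. split. lia. exists e1.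
      rewrite Hs1, nth_error_app2 by lia. replace (S i + z - length l1) with (S z) by lia.
      simpl. rewrite Hs2, nth_error_app1 by lia. exact Hz. }
    specialize (WF p). fold (proj p h) in WF.
    rewrite Hs1, proj_app, proj_cons_eq, Hs2, proj_app, proj_cons_eq, Hp3 in WF.
    simpl in WF. eapply alt_two_inv; eauto.
  - apply Hnr. exists y. split; auto. exists p, o, v. split; auto. split; auto.
    intros k q e1 Hk1 Hk2 Hke Hqp. subst q. apply (Hmin k); eauto.
Qed.

Lemma pend_unique (h : list (proc * evt)) i i' p o o' :
  well_formed h -> nth_error h i = Some (p, EInv RES o) -> ~ (exists j, resp_of h i j) ->
  nth_error h i' = Some (p, EInv RES o') -> ~ (exists j, resp_of h i' j) -> i = i'.
Proof.
  intros WF H1 H2 H3 H4. destruct (lt_eq_lt_dec i i') as [[Hlt|]|Hlt]; auto.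
  - exfalso. eapply (pend_no_later h i p o WF H1 H2 i'); eauto.
  - exfalso. eapply (pend_no_later h i' p o' WF H3 H4 i); eauto.
Qed.


Section Keep.
Variable keep : nat -> bool.

Definition F (l : list (proc * evt)) (s : nat) : list (proc * evt) :=
  map snd (filter (fun ix => keep (fst ix)) (combine (seq s (length l)) l)).

Definition cnt (s x : nat) : nat := length (filter keep (seq s x)).

Lemma F_cons a l s : F (a :: l) s = (if keep s then [a] else []) ++ F l (S s).
Proof. unfold F. simpl. destruct (keep s); reflexivity. Qed.

Lemma F_app l1 l2 s : F (l1 ++ l2) s = F l1 s ++ F l2 (s + length l1).
Proof.
  revert s. induction l1 as [|a l1 IH]; intros s.
  - simpl. rewrite Nat.add_0_r. reflexivity.
  - simpl app. rewrite !F_cons, IH. rewrite app_assoc. f_equal. f_equal. simpl. lia.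
Qed.

Lemma cnt_S s x : cnt s (S x) = (if keep s then 1 else 0) + cnt (S s) x.
Proof. unfold cnt. simpl. destruct (keep s); reflexivity. Qed.

Lemma cnt_add s x d : cnt s (x + d) = cnt s x + cnt (s + x) d.
Proof. unfold cnt. rewrite seq_app, filter_app, length_app. reflexivity. Qed.

Lemma cnt_mono s x y : x <= y -> cnt s x <= cnt s y.
Proof. intros H. replace y with (x + (y - x)) by lia. rewrite cnt_add. lia. Qed.

Lemma cnt_keep s x : keep (s + x) = true -> cnt s (S x) = S (cnt s x).
Proof. intros H. rewrite <- Nat.add_1_r, cnt_add, cnt_S, H. simpl. unfold cnt at 2. simpl. lia. Qed.

Lemma cnt_strict s x y : keep (s + x) = true -> x < y -> cnt s x < cnt s y.
Proof. intros H1 H2. pose proof (cnt_keep s x H1). pose proof (cnt_mono s (S x) y H2). lia. Qed.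

Lemma len_F l s : length (F l s) = cnt s (length l).
Proof.
  revert s. induction l as [|a l IH]; intros s; [reflexivity|].
  rewrite F_cons, length_app, IH. simpl length. rewrite cnt_S. destruct (keep s); reflexivity.
Qed.

Lemma nth_F l s x : x < length l -> keep (s + x) = true -> nth_error (F l s) (cnt s x) = nth_error l x.
Proof.
  revert s x. induction l as [|a l IH]; intros s x Hx Hk; simpl in Hx; [lia|].
  rewrite F_cons. destruct x as [|x].
  - rewrite Nat.add_0_r in Hk. rewrite Hk. reflexivity.
  - rewrite cnt_S. simpl nth_error at 2. rewrite <- (IH (S s) x) by (try lia; rewrite <- Hk; f_equal; lia).
    destruct (keep s); reflexivity.
Qed.

Lemma nth_F_inv l s y e : nth_error (F l s) y = Some e ->
  exists x, x < length l /\ keep (s + x) = true /\ cnt s x = y /\ nth_error l x = Some e.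
Proof.
  revert s y. induction l as [|a l IH]; intros s y H.
  - unfold F in H. simpl in H. destruct y; discriminate.
  - rewrite F_cons in H. destruct (keep s) eqn:Hk.
    + destruct y as [|y].
      * simpl in H. inversion H; subst. exists 0. rewrite Nat.add_0_r. simpl. repeat split; auto; lia.
      * simpl in H. destruct (IH (S s) y H) as [x [H1 [H2 [H3 H4]]]]. exists (S x).
        simpl. repeat split; try lia. rewrite <- H2. f_equal; lia.
        rewrite cnt_S, Hk, H3. reflexivity. auto.
    + simpl in H. destruct (IH (S s) y H) as [x [H1 [H2 [H3 H4]]]]. exists (S x).
      simpl. repeat split; try lia. rewrite <- H2. f_equal; lia.
      rewrite cnt_S, Hk, H3. reflexivity. auto.
Qed.

Lemma proj_F_all p l s : (forall x e, nth_error l x = Some (p, e) -> keep (s + x) = true) ->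
  proj p (F l s) = proj p l.
Proof.
  revert s. induction l as [|[q e] l IH]; intros s H; [reflexivity|].
  rewrite F_cons. destruct (Nat.eq_dec q p) as [->|Hne].
  - assert (Hk : keep s = true) by (rewrite <- (Nat.add_0_r s); apply (H 0 e); reflexivity).
    rewrite Hk. simpl app. rewrite !proj_cons_eq, IH; auto.
    intros x e' Hx. rewrite <- (H (S x) e' Hx). f_equal; lia.
  - rewrite proj_cons_neq by auto. rewrite proj_app, IH.
    destruct (keep s); simpl; [rewrite proj_cons_neq by auto|]; reflexivity.
    intros x e' Hx. rewrite <- (H (S x) e' Hx). f_equal; lia.
Qed.

End Keep.

Section Gen.
Context {X Y : Type}.
Definition fo (f : X -> option Y) (l : list X) : list Y :=
  flat_map (fun x => match f x with Some y => [y] | None => [] end) l.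

Lemma fo_inv f l e y : nth_error (fo f l) e = Some y -> exists k x, nth_error l k = Some x /\ f x = Some y.
Proof.
  revert e. induction l as [|a l IH]; intros e H; [destruct e; discriminate|].
  unfold fo in H. simpl in H. fold (fo f l) in H. destruct (f a) eqn:Hfa.
  - destruct e as [|e]; simpl in H.
    + inversion H; subst. exists 0, a. auto.
    + destruct (IH e H) as [k [x [H1 H2]]]. exists (S k), x. auto.
  - destruct (IH e H) as [k [x [H1 H2]]]. exists (S k), x. auto.
Qed.

Lemma fo_in f l k x y : nth_error l k = Some x -> f x = Some y ->
  exists e, nth_error (fo f l) e = Some y /\
    forall e' y', e' < e -> nth_error (fo f l) e' = Some y' ->
      exists k' x', k' < k /\ nth_error l k' = Some x' /\ f x' = Some y'.
Proof.
  revert k. induction l as [|a l IH]; intros k Hk Hf; [destruct k; discriminate|].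
  unfold fo. simpl. fold (fo f l). destruct k as [|k].
  - simpl in Hk. inversion Hk; subst. rewrite Hf. exists 0. split; [reflexivity|]. intros; lia.
  - simpl in Hk. destruct (IH k Hk Hf) as [e [H1 H2]].
    destruct (f a) eqn:Hfa.
    + exists (S e). split; [exact H1|]. intros e' y' He' Hn. destruct e' as [|e'].
      * simpl in Hn. inversion Hn; subst. exists 0, a. split; [lia|]. auto.
      * simpl in Hn. destruct (H2 e' y') as [k' [x' [Hk1 [Hk2 Hk3]]]]; auto; try lia.
        exists (S k'), x'. split; [lia|]. auto.
    + exists e. split; [exact H1|]. intros e' y' He' Hn.
      destruct (H2 e' y') as [k' [x' [Hk1 [Hk2 Hk3]]]]; auto.
      exists (S k'), x'. split; [lia|]. auto.
Qed.

Lemma nodup_comp (f : X -> nat) (q : nat -> nat) l : NoDup (map f l) ->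
  (forall a b, In a l -> In b l -> q (f a) = q (f b) -> f a = f b) -> NoDup (map (fun x => q (f x)) l).
Proof.
  induction l as [|a l IH]; intros H1 H2; simpl; constructor.
  - intros Hin. apply in_map_iff in Hin. destruct Hin as [b [Hb1 Hb2]].
    simpl in H1. inversion H1 as [|u v Hn Hd]; subst. apply Hn. rewrite (H2 a b); [apply in_map; auto|left;auto|right;auto|auto].
  - apply IH. inversion H1; auto. intros; apply H2; auto; right; auto.
Qed.
End Gen.

Lemma nth_nth_error {A} (l : list A) k d x : nth_error l k = Some x -> nth k l d = x.
Proof. revert k. induction l; intros [|k] H; simpl in *; try discriminate; auto. inversion H; auto. Qed.

Lemma qle_nat a b : a <= b -> (qtime a <= qtime b)%Q.
Proof. intros H. unfold qtime. rewrite <- Zle_Qle. lia. Qed.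

Lemma qtime_S a : (qtime (S a) == qtime a + 1)%Q.
Proof. unfold qtime. rewrite Znat.Nat2Z.inj_succ. unfold Z.succ. rewrite inject_Z_plus. reflexivity. Qed.

Lemma inv_pos k : (0 < 1 # Pos.of_succ_nat k)%Q.
Proof. reflexivity. Qed.

Lemma inv_le1 k : (1 # Pos.of_succ_nat k <= 1)%Q.
Proof. unfold Qle. simpl. lia. Qed.

Lemma inv_dec k : (1 # Pos.of_succ_nat (S k) < 1 # Pos.of_succ_nat k)%Q.
Proof. unfold Qlt. simpl. rewrite !Znat.Zpos_P_of_succ_nat. lia. Qed.


Definition gi (g : nat * nat * St * RES) := fst (fst (fst g)).
Definition gn (g : nat * nat * St * RES) := snd (fst (fst g)).
Definition gs (g : nat * nat * St * RES) := snd (fst g).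
Definition gr (g : nat * nat * St * RES) := snd g.
Definition prevst (G : list (nat * nat * St * RES)) (k : nat) : St :=
  match k with 0 => s0 | S k' => match nth_error G k' with Some g => gs g | None => s0 end end.


Lemma fo_nil {X Y} (f : X -> option Y) l : (forall x, In x l -> f x = None) -> fo f l = [].
Proof.
  induction l as [|a l IH]; intros H; [reflexivity|]. unfold fo. simpl. rewrite H by (left; auto).
  apply IH. intros; apply H; right; auto.
Qed.

Lemma fo_app {X Y} (f : X -> option Y) l1 l2 : fo f (l1 ++ l2) = fo f l1 ++ fo f l2.
Proof. unfold fo. apply flat_map_app. Qed.

Lemma proj_fo (pb : nat -> bool) (pr : nat -> proc) p (G : list (nat * nat * St * RES)) :
  proj p (map (fun x => (fst x, EResp OP (RVal (snd x))))
     (fo (fun g => if pb (gi g) then Some (pr (gi g), gr g) else None) G)) =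
  fo (fun g => if pb (gi g) && Nat.eqb (pr (gi g)) p then Some (EResp OP (RVal (gr g))) else None) G.
Proof.
  induction G as [|g G IH]; [reflexivity|]. unfold fo in *. simpl.
  destruct (pb (gi g)); simpl; [|exact IH].
  unfold proj in *. simpl. destruct (Nat.eqb (pr (gi g)) p); simpl; rewrite IH; reflexivity.
Qed.

Fixpoint findpt (cf : nat -> nat) (y : nat) (G : list (nat * nat * St * RES)) (k : nat) : Q :=
  match G with
  | [] => 0%Q
  | g :: G' => if Nat.eqb (cf (gi g)) y then (qtime (cf (gn g)) - (1 # Pos.of_succ_nat k))%Q
               else findpt cf y G' (S k)
  end.

Lemma findpt_spec cf G : NoDup (map (fun g => cf (gi g)) G) -> forall k m g, nth_error G k = Some g ->
  findpt cf (cf (gi g)) G m = (qtime (cf (gn g)) - (1 # Pos.of_succ_nat (m + k)))%Q.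
Proof.
  induction G as [|a G IH]; intros HN k m g Hk; [destruct k; discriminate|].
  simpl. inversion HN as [|u v Hn Hd]; subst. destruct k as [|k].
  - simpl in Hk. inversion Hk; subst. rewrite Nat.eqb_refl, Nat.add_0_r. reflexivity.
  - simpl in Hk. destruct (Nat.eqb (cf (gi a)) (cf (gi g))) eqn:E.
    + exfalso. apply Nat.eqb_eq in E. apply Hn. rewrite E. apply (in_map (fun g => cf (gi g))).
      eapply nth_error_In; eauto.
    + rewrite (IH Hd k (S m) g Hk). do 3 f_equal. lia.
Qed.

Lemma partA (h : list (proc * evt)) (G : list (nat * nat * St * RES)) :
  well_formed h -> NoDup (map gi G) ->
  (forall k g, nth_error G k = Some g ->
     (exists p o, nth_error h (gi g) = Some (p, EInv RES o) /\ delta (prevst G k) o (gs g) (gr g)) /\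
     gi g < gn g /\ gn g <= length h) ->
  (forall k g g', nth_error G k = Some g -> nth_error G (S k) = Some g' -> gn g <= gn g') ->
  (forall i j, resp_of h i j -> exists k g p, nth_error G k = Some g /\ gi g = i /\ gn g <= j /\
      nth_error h j = Some (p, EResp OP (RVal (gr g)))) ->
  exists h', is_completion h h' /\ linearizable_conforming delta s0 h'.
Proof.
  intros WF HND HG Hmono Hresp.
  set (Li := map gi G).
  set (pendb := fun i => if excluded_middle_informative (pending h i) then true else false).
  set (keep := fun x => if excluded_middle_informative (pending h x /\ ~ In x Li) then false else true).
  set (procof := fun i => match nth_error h i with Some (p, _) => p | None => 0 end).
  set (fE := fun g => if pendb (gi g) then Some (procof (gi g), gr g) else None).
  set (E := fo fE G).
  set (h0 := F keep h 0).
  set (hE := map (fun pr => (fst pr, EResp OP (RVal (snd pr)))) E).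
  set (cn := cnt keep 0).
  assert (Hlen0 : length h0 = cn (length h)) by apply len_F.
  assert (K1 : forall g, In g G -> keep (gi g) = true).
  { intros g Hg. unfold keep. destruct excluded_middle_informative as [[_ Hn]|]; auto.
    exfalso. apply Hn. apply in_map. auto. }
  assert (K2 : forall j p v, nth_error h j = Some (p, EResp OP v) -> keep j = true).
  { intros j p v Hj. unfold keep. destruct excluded_middle_informative as [[[[q [o Hq]] _] _]|]; auto.
    congruence. }
  assert (Kpend : forall x, keep x = false -> pending h x).
  { intros x. unfold keep. destruct excluded_middle_informative as [[H _]|]; auto. discriminate. }
  assert (Kin : forall x, pending h x -> keep x = true -> In x Li).
  { intros x Hp. unfold keep. destruct excluded_middle_informative as [|Hn]; [discriminate|].
    intros _. destruct (classic (In x Li)); auto. exfalso. apply Hn. auto. }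
  assert (Hh0 : forall x, x < length h -> keep x = true -> nth_error (h0 ++ hE) (cn x) = nth_error h x).
  { intros x Hx Hk. rewrite nth_error_app1. apply nth_F; auto.
    rewrite Hlen0. apply cnt_strict; auto. }
  assert (Hh0inv : forall y e, nth_error (h0 ++ hE) y = Some e -> y < length h0 ->
             exists x, x < length h /\ keep x = true /\ cn x = y /\ nth_error h x = Some e).
  { intros y e Hy Hl. rewrite nth_error_app1 in Hy by auto. apply nth_F_inv in Hy. exact Hy. }
  assert (HhE : forall e, nth_error (h0 ++ hE) (length h0 + e) =
     match nth_error E e with Some pr => Some (fst pr, EResp OP (RVal (snd pr))) | None => None end).
  { intros e. rewrite nth_error_app2 by lia. replace (length h0 + e - length h0) with e by lia.
    unfold hE. rewrite nth_error_map. destruct (nth_error E e); reflexivity. }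
  assert (Hcn_lt : forall x y, keep x = true -> x < y -> cn x < cn y).
  { intros. apply cnt_strict; auto. }
  assert (Hcn_mono : forall x y, x <= y -> cn x <= cn y).
  { intros. apply cnt_mono; auto. }
  assert (Cresp : forall i j, resp_of h i j -> resp_of (h0 ++ hE) (cn i) (cn j)).
  { intros i j Hr. pose proof Hr as [Hij [p [o [v [Hi [Hj Hb]]]]]].
    assert (Hki : keep i = true).
    { destruct (keep i) eqn:E1; auto. destruct (Kpend i E1) as [_ Hn]. exfalso; eauto. }
    assert (Hkj : keep j = true) by eauto.
    assert (Hjl : j < length h) by (apply nth_error_Some; congruence).
    split; [apply Hcn_lt; auto|].
    exists p, o, v. split; [rewrite Hh0 by (auto; lia); auto|]. split; [rewrite Hh0 by auto; auto|].
    intros k q e Hk1 Hk2 Hke. assert (Hkl : k < length h0).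
    { rewrite Hlen0. pose proof (Hcn_mono j (length h)). lia. }
    destruct (Hh0inv k _ Hke Hkl) as [x [Hx1 [Hx2 [Hx3 Hx4]]]]. subst k.
    apply (Hb x q e); auto.
    - destruct (Nat.lt_ge_cases i x); auto. pose proof (Hcn_mono x i). lia.
    - destruct (Nat.lt_ge_cases x j); auto. pose proof (Hcn_mono j x). lia. }
  assert (Cpend : forall k g, nth_error G k = Some g -> pending h (gi g) ->
     exists e, resp_of (h0 ++ hE) (cn (gi g)) (length h0 + e) /\
       nth_error (h0 ++ hE) (length h0 + e) = Some (procof (gi g), EResp OP (RVal (gr g)))).
  { intros k g Hk Hp. pose proof Hp as [[p [o Hi]] Hnr].
    assert (HfE : fE g = Some (procof (gi g), gr g)).
    { unfold fE, pendb. destruct excluded_middle_informative; [reflexivity|contradiction]. }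
    destruct (fo_in fE G k g _ Hk HfE) as [e [He Hbef]].
    assert (Hpr : procof (gi g) = p) by (unfold procof; rewrite Hi; reflexivity).
    assert (Hkg : keep (gi g) = true) by (apply K1; eapply nth_error_In; eauto).
    assert (Hil : gi g < length h) by (apply nth_error_Some; congruence).
    exists e. assert (Hne : nth_error (h0 ++ hE) (length h0 + e) = Some (procof (gi g), EResp OP (RVal (gr g)))).
    { rewrite HhE. fold E in He. rewrite He. reflexivity. }
    split; auto. split.
    { rewrite Hlen0. pose proof (Hcn_lt (gi g) (length h) Hkg Hil). unfold cn in *. lia. }
    exists p, o, (RVal (gr g)). split; [rewrite Hh0; auto|]. split; [rewrite Hne, Hpr; auto|].
    intros y q e1 Hy1 Hy2 Hye Hqp. subst q.
    destruct (Nat.lt_ge_cases y (length h0)) as [Hyl|Hyl].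
    - destruct (Hh0inv y _ Hye Hyl) as [x [Hx1 [Hx2 [Hx3 Hx4]]]]. subst y.
      apply (pend_no_later h (gi g) p o WF Hi Hnr x p e1); auto.
      destruct (Nat.lt_ge_cases (gi g) x); auto. pose proof (Hcn_mono x (gi g)). lia.
    - replace y with (length h0 + (y - length h0)) in Hye by lia.
      rewrite HhE in Hye. destruct (nth_error E (y - length h0)) as [[q r]|] eqn:Hq; [|discriminate].
      simpl in Hye. inversion Hye; subst q.
      destruct (Hbef (y - length h0) (p, r)) as [k' [g' [Hk1 [Hk2 Hk3]]]]; [lia|exact Hq|].
      unfold fE, pendb in Hk3. destruct excluded_middle_informative as [Hp'|]; [|discriminate].
      inversion Hk3. pose proof Hp' as [[p' [o' Hi']] Hnr'].
      assert (p' = p) by (rewrite <- H0; unfold procof; rewrite Hi'; reflexivity). subst p'.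
      pose proof (pend_unique h _ _ p o' o WF Hi' Hnr' Hi Hnr) as Heq.
      assert (k' = k).
      { eapply NoDup_nth_error; [exact HND| |].
        - rewrite length_map. apply nth_error_Some. congruence.
        - rewrite !nth_error_map, Hk, Hk2. simpl. rewrite Heq. reflexivity. }
      lia. }
  assert (Cinv : forall y, is_inv (h0 ++ hE) y -> exists k g, nth_error G k = Some g /\ cn (gi g) = y).
  { intros y [p [o Hy]]. destruct (Nat.lt_ge_cases y (length h0)) as [Hyl|Hyl].
    - destruct (Hh0inv y _ Hy Hyl) as [x [Hx1 [Hx2 [Hx3 Hx4]]]]. subst y.
      assert (Hin : In x Li).
      { destruct (classic (exists j, resp_of h x j)) as [[j Hj]|Hnj].
        - destruct (Hresp x j Hj) as [k [g [p' [Hk [Hgi _]]]]]. subst x. apply in_map. eapply nth_error_In; eauto.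
        - apply Kin; auto. split; eauto. exists p, o. auto. }
      unfold Li in Hin. apply in_map_iff in Hin. destruct Hin as [g [Hg1 Hg2]].
      destruct (In_nth_error _ _ Hg2) as [k Hk]. exists k, g. subst. auto.
    - replace y with (length h0 + (y - length h0)) in Hy by lia. rewrite HhE in Hy.
      destruct (nth_error E (y - length h0)); discriminate. }
  assert (Cgood : forall k g, nth_error G k = Some g ->
     exists j p o r, resp_of (h0 ++ hE) (cn (gi g)) j /\
        nth_error (h0 ++ hE) (cn (gi g)) = Some (p, EInv RES o) /\
        nth_error (h0 ++ hE) j = Some (p, EResp OP (RVal r)) /\
        cn (gn g) <= j /\ r = gr g).
  { intros k g Hk. destruct (classic (exists j, resp_of h (gi g) j)) as [[j Hj]|Hnj].
    - destruct (Hresp _ _ Hj) as [k' [g' [p' [Hk' [Hgi [Hn Hjr]]]]]].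
      assert (k' = k).
      { eapply NoDup_nth_error; [exact HND| |].
        - rewrite length_map. apply nth_error_Some. congruence.
        - rewrite !nth_error_map, Hk, Hk'. simpl. rewrite Hgi. reflexivity. }
      subst k'. rewrite Hk in Hk'. inversion Hk'; subst g'.
      pose proof (Cresp _ _ Hj) as Hr'. pose proof Hr' as [_ [p [o [v [H1 [H2 _]]]]]].
      pose proof Hj as [_ [p2 [o2 [v2 [_ [H3 _]]]]]].
      assert (Hjl : j < length h) by (apply nth_error_Some; congruence).
      rewrite Hh0 in H2 by (auto; eapply K2; eauto). rewrite H2 in Hjr. inversion Hjr; subst p' v.
      exists (cn j), p, o, (gr g). split; [exact Hr'|]. split; [exact H1|]. split; [rewrite Hh0 by (auto; eapply K2; eauto); exact H2|]. split; [apply Hcn_mono; auto|reflexivity].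

    - assert (Hp : pending h (gi g)).
      { split; auto. destruct (HG k g Hk) as [[p [o [Hi _]]] _]. exists p, o; auto. }
      destruct (Cpend k g Hk Hp) as [e [Hr He]]. pose proof Hr as [_ [p [o [v [H1 [H2 _]]]]]].
      rewrite He in H2. inversion H2; subst.
      exists (length h0 + e), (procof (gi g)), o, (gr g). split; [exact Hr|]. split; [exact H1|]. split; [exact He|]. split; [|reflexivity].
      rewrite Hlen0. destruct (HG k g Hk) as [_ [_ Hle]]. pose proof (Hcn_mono _ _ Hle). lia. }
  exists (h0 ++ hE). split.
  -
    exists keep, E. split; [intros i _ Hk; apply Kpend; auto|]. split; [reflexivity|]. split.
    +
      intros p. fold (proj p (h0 ++ hE)). rewrite proj_app.
      unfold hE, E, fE. rewrite proj_fo.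
      destruct (classic (exists x o, nth_error h x = Some (p, EInv RES o) /\ pending h x)) as [[x0 [o0 [Hx0 Hpx0]]]|Hnone].
      * pose proof Hpx0 as [_ Hnr0].
        assert (Hx0l : x0 < length h) by (apply nth_error_Some; congruence).
        destruct (nthsplit h x0 _ Hx0) as [Hs Hl1].
        set (l1 := firstn x0 h) in *. set (l2 := skipn (S x0) h) in *.
        assert (Hl2 : proj p l2 = []).
        { apply proj_nil_of. intros [q e] Hin Hq. simpl in Hq. subst q.
          destruct (In_nth_error _ _ Hin) as [z Hz].
          apply (pend_no_later h x0 p o0 WF Hx0 Hnr0 (S x0 + z) p e); auto; [lia|].
          rewrite Hs, nth_error_app2 by lia. replace (S x0 + z - length l1) with (S z) by lia. exact Hz. }
        assert (Hph : proj p h = proj p l1 ++ [EInv RES o0]).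
        { rewrite Hs at 1. rewrite proj_app, proj_cons_eq, Hl2. reflexivity. }
        assert (Honly : forall x e, nth_error h x = Some (p, e) -> keep x = false -> x = x0).
        { intros x e Hx Hk. pose proof (Kpend x Hk) as Hpx. pose proof Hpx as [[q [o Hq]] Hnr].
          rewrite Hx in Hq. inversion Hq; subst q e.
          apply (pend_unique h x x0 p o o0 WF Hx Hnr Hx0 Hnr0). }
        assert (Hcond : forall g, In g G -> (pendb (gi g) && Nat.eqb (procof (gi g)) p)%bool = true -> gi g = x0).
        { intros g Hg Hc. apply andb_prop in Hc. destruct Hc as [Hc1 Hc2]. apply Nat.eqb_eq in Hc2.
          unfold pendb in Hc1. destruct excluded_middle_informative as [Hpg|]; [|discriminate].
          pose proof Hpg as [[q [o Hq]] Hnr]. unfold procof in Hc2. rewrite Hq in Hc2. subst q.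
          apply (pend_unique h _ x0 p o o0 WF Hq Hnr Hx0 Hnr0). }
        destruct (keep x0) eqn:Hk0.
        -- assert (Hh0p : proj p h0 = proj p h).
           { apply proj_F_all. intros x e Hx. simpl. destruct (keep x) eqn:Hkx; auto.
             pose proof (Honly x e Hx Hkx) as Hxx. rewrite Hxx in Hkx. congruence. }
           rewrite Hh0p, Hph.
           assert (Hin : In x0 Li) by (apply Kin; auto).
           unfold Li in Hin. apply in_map_iff in Hin. destruct Hin as [g0 [Hg0 Hg0in]].
           destruct (In_nth_error _ _ Hg0in) as [k0 Hk0n].
           destruct (nthsplit G k0 _ Hk0n) as [HsG _].
           set (G1 := firstn k0 G) in *. set (G2 := skipn (S k0) G) in *.
           assert (Hnd' : ~ In x0 (map gi G1 ++ map gi G2)).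
           { apply (NoDup_remove_2 (map gi G1) (map gi G2) x0). rewrite <- Hg0, <- map_cons, <- map_app, <- HsG. exact HND. }
           rewrite HsG, fo_app. change (g0 :: G2) with ([g0] ++ G2). rewrite fo_app.
           rewrite (fo_nil _ G1), (fo_nil _ G2).
           ++ unfold fo at 1. simpl.
              assert (Hc0 : (pendb (gi g0) && Nat.eqb (procof (gi g0)) p)%bool = true).
              { apply andb_true_intro. split.
                - unfold pendb. rewrite Hg0. destruct excluded_middle_informative; auto.
                - unfold procof. rewrite Hg0, Hx0. apply Nat.eqb_refl. }
              rewrite Hc0. simpl. rewrite <- app_assoc. simpl. apply alt_resp_after_inv.
              specialize (WF p). fold (proj p h) in WF. rewrite Hph in WF. exact WF.
           ++ intros g Hg. destruct (pendb (gi g) && Nat.eqb (procof (gi g)) p)%bool eqn:Hc; auto.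
              exfalso. apply Hnd'. rewrite <- (Hcond g); [apply in_or_app; right; apply in_map; auto| |auto].
              rewrite HsG. apply in_or_app. right. right. auto.
           ++ intros g Hg. destruct (pendb (gi g) && Nat.eqb (procof (gi g)) p)%bool eqn:Hc; auto.
              exfalso. apply Hnd'. rewrite <- (Hcond g); [apply in_or_app; left; apply in_map; auto| |auto].
              rewrite HsG. apply in_or_app. left. auto.
        -- rewrite (fo_nil _ G).
           ++ unfold h0. rewrite Hs, F_app, F_cons, Nat.add_0_l, Hl1, Hk0. simpl app.
              rewrite proj_app, (proj_F_all keep p l2), Hl2, (proj_F_all keep p l1).
              ** rewrite !app_nil_r. apply (alt_prefix _ _ [EInv RES o0]).
                 specialize (WF p). fold (proj p h) in WF. rewrite Hph in WF. exact WF.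
              ** intros x e Hx. simpl. destruct (keep x) eqn:Hkx; auto. exfalso.
                 assert (Hxl : x < length l1) by (apply nth_error_Some; congruence).
                 assert (nth_error h x = Some (p, e)) by (rewrite Hs, nth_error_app1; auto).
                 pose proof (Honly x e H Hkx). lia.
              ** intros x e Hx. exfalso. assert (In (p, e) l2) by (eapply nth_error_In; eauto).
                 assert (In e (proj p l2)). { unfold proj. apply in_map_iff. exists (p, e). split; auto.
                   apply filter_In. split; auto. apply Nat.eqb_refl. }
                 rewrite Hl2 in H0. destruct H0.
           ++ intros g Hg. destruct (pendb (gi g) && Nat.eqb (procof (gi g)) p)%bool eqn:Hc; auto.
              exfalso. pose proof (Hcond g Hg Hc). pose proof (K1 g Hg). congruence.
      * rewrite (fo_nil _ G).
        -- rewrite app_nil_r. unfold h0. rewrite proj_F_all. apply WF.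
           intros x e Hx. simpl. destruct (keep x) eqn:Hkx; auto. exfalso.
           pose proof (Kpend x Hkx) as Hpx. pose proof Hpx as [[q [o Hq]] _]. rewrite Hx in Hq. inversion Hq; subst.
           apply Hnone. exists x, o. auto.
        -- intros g Hg. destruct (pendb (gi g) && Nat.eqb (procof (gi g)) p)%bool eqn:Hc; auto.
           exfalso. apply andb_prop in Hc. destruct Hc as [Hc1 Hc2]. apply Nat.eqb_eq in Hc2.
           unfold pendb in Hc1. destruct excluded_middle_informative as [Hpg|]; [|discriminate].
           pose proof Hpg as [[q [o Hq]] Hnr]. unfold procof in Hc2. rewrite Hq in Hc2. subst q.
           apply Hnone. exists (gi g), o. auto.
    + intros y Hy. destruct (Cinv y Hy) as [k [g [Hk Hy']]]. subst y.
      destruct (Cgood k g Hk) as [j [_ [_ [_ [Hr _]]]]]. eauto.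
  -
    set (L' := map (fun g => cn (gi g)) G).
    assert (HNL : NoDup L').
    { apply nodup_comp; auto. intros a b Ha Hb Hab.
      pose proof (K1 a Ha). pose proof (K1 b Hb).
      destruct (lt_eq_lt_dec (gi a) (gi b)) as [[Hl|Hl]|Hl]; auto.
      - pose proof (Hcn_lt _ _ H Hl). lia.
      - pose proof (Hcn_lt _ _ H0 Hl). lia. }
    assert (HnthL : forall k g, nth_error G k = Some g -> nth k L' 0 = cn (gi g)).
    { intros k g Hk. apply nth_nth_error. unfold L'. rewrite nth_error_map, Hk. reflexivity. }
    assert (HlenL : length L' = length G) by apply length_map.
    assert (Hex : forall k, k < length L' -> exists g, nth_error G k = Some g).
    { intros k Hk. rewrite HlenL in Hk. destruct (nth_error G k) eqn:E1; eauto.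
      apply nth_error_None in E1. lia. }
    exists L', (fun y => findpt cn y G 0), (prevst G). split; [auto|]. split.
    + intros y. split.
      * intros Hy. unfold L' in Hy. apply in_map_iff in Hy. destruct Hy as [g [Hg1 Hg2]]. subst y.
        destruct (In_nth_error _ _ Hg2) as [k Hk].
        destruct (Cgood k g Hk) as [j [p [o [r [_ [H1 _]]]]]]. exists p, o. auto.
      * intros Hy. destruct (Cinv y Hy) as [k [g [Hk Hy']]]. subst y. unfold L'.
        apply (in_map (fun g => cn (gi g))). eapply nth_error_In; eauto.
    + split; [|split; [reflexivity|]].
      * intros k Hk. destruct (Hex k) as [g Hg]; [lia|]. destruct (Hex (S k)) as [g' Hg']; [lia|].
        rewrite (HnthL _ _ Hg), (HnthL _ _ Hg').
        rewrite (findpt_spec cn G HNL k 0 g Hg), (findpt_spec cn G HNL (S k) 0 g' Hg').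
        change (0 + k) with k. change (0 + S k) with (S k). pose proof (Hmono k g g' Hg Hg'). pose proof (qle_nat _ _ (Hcn_mono _ _ H)).
        pose proof (inv_dec k). lra.
      * intros k Hk. destruct (Hex k) as [g Hg]. auto.
        destruct (Cgood k g Hg) as [j [p [o [r [H1 [H2 [H3 [H4 H5]]]]]]]].
        exists j, p, o, r. rewrite (HnthL _ _ Hg). split; auto. split; auto. split; auto.
        rewrite (findpt_spec cn G HNL k 0 g Hg). change (0 + k) with k.
        destruct (HG k g Hg) as [[p' [o' [Hi Hd]]] [Hlt _]].
        assert (Hkg : keep (gi g) = true) by (apply K1; eapply nth_error_In; eauto).
        pose proof (Hcn_lt _ _ Hkg Hlt). pose proof (qle_nat _ _ H). rewrite qtime_S in H0.
        pose proof (qle_nat _ _ H4). pose proof (inv_pos k). pose proof (inv_le1 k).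
        split; [lra|]. split; [lra|].
        rewrite (Hh0 (gi g)) in H2 by (auto; apply nth_error_Some; congruence). rewrite Hi in H2.
        inversion H2; subst. simpl. rewrite Hg. exact Hd.
Qed.

End PA.

Section PB.
Context (OP RES St : Type) (delta : St -> OP -> St -> RES -> Prop) (s0 : St).
Notation evt := (ev OP RES).
Notation cfg := (config OP RES St).
Notation pcT := (pcst OP RES St).
Notation svt := (sval RES St).
Notation avt := (aval OP).
Notation gT := (nat * nat * St * RES)%type.
Notation prevst := (prevst RES St s0).
Notation proj := (proj OP RES).
Notation RB := (@RBot RES).
Notation RN := (@RNull RES).
Notation IdleT := (@Idle OP RES St).
Notation A2 o := (@At2 OP RES St o).
Notation A3 o t := (@At3 OP RES St o t).
Notation A4 o t := (@At4 OP RES St o t).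
Notation A5 o t := (@At5 OP RES St o t).
Notation A6 o t sv := (@At6 OP RES St o t sv).
Notation A7 o t sv := (@At7 OP RES St o t sv).
Notation A8 o t sv := (@At8 OP RES St o t sv).
Notation A9 o t sv av := (@At9 OP RES St o t sv av).
Notation A12 o t sv av s r := (@At12 OP RES St o t sv av s r).
Notation A13 o t sv av := (@At13 OP RES St o t sv av).
Notation A14 o t := (@At14 OP RES St o t).
Notation tiT := (nat -> option (proc * OP * nat)).

Implicit Types (h : list (proc * evt)) (c : cfg) (G : list gT) (TI : tiT).

Definition gtm (g : gT) := fst (fst (fst g)).
Definition Gt (G : list gT) := map gtm G.
Definition appr (G : list gT) t r := exists k n s, nth_error G k = Some (t, n, s, r).

Definition cur (h : list (proc * evt)) p i (o : OP) :=
  nth_error h i = Some (p, EInv RES o) /\ forall x q e, i < x -> nth_error h x = Some (q, e) -> q <> p.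

Definition HistS (G : list gT) (TI : tiT) (sv : svt) :=
  sv = (0, s0, RB, None) \/
  exists k t n s r q o i, nth_error G k = Some (t, n, s, r) /\ sv = (t, s, RVal r, Some q) /\ TI t = Some (q, o, i).

Definition AV (TI : tiT) (av : avt) :=
  av = (0, None, None) \/ exists ta o q i, av = (ta, Some o, Some q) /\ TI ta = Some (q, o, i).

Definition Hnn (H : proc -> hval RES) (sv : svt) := deref H (snd sv) <> (fst (fst (fst sv)), RN).

Definition pctime (x : pcT) : option nat :=
  match x with
  | @Idle _ _ _ => None | @At2 _ _ _ _ => None
  | @At3 _ _ _ _ t => Some t | @At4 _ _ _ _ t => Some t | @At5 _ _ _ _ t => Some t | @At6 _ _ _ _ t _ => Some t
  | @At7 _ _ _ _ t _ => Some t | @At8 _ _ _ _ t _ => Some t | @At9 _ _ _ _ t _ _ => Some t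
  | @At12 _ _ _ _ t _ _ _ _ => Some t | @At13 _ _ _ _ t _ _ => Some t | @At14 _ _ _ _ t => Some t
  end.

Definition inwork4 (x : pcT) (t : nat) : Prop :=
  match x with
  | @Idle _ _ _ => False | @At2 _ _ _ _ => False | @At3 _ _ _ _ _ => False | @At14 _ _ _ _ _ => False
  | _ => pctime x = Some t
  end.

Definition work_ok h (c : cfg) (TI : tiT) (PI : proc -> nat) G p o t :=
  cur h p (PI p) o /\ TI t = Some (p, o, PI p) /\ fst (cH c p) = t /\
  (snd (cH c p) = RN \/ exists r, appr G t r /\ snd (cH c p) = RVal r).

Definition PInv h (c : cfg) (TI : tiT) (PI : proc -> nat) (G : list gT) (p : proc) : Prop :=
  match cpc c p with
  | @Idle _ _ _ => snd (cH c p) <> RN /\ forall l o, proj p h <> l ++ [EInv RES o]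
  | @At2 _ _ _ o => snd (cH c p) <> RN /\ cur h p (PI p) o
  | @At3 _ _ _ o t => snd (cH c p) <> RN /\ cur h p (PI p) o /\ TI t = Some (p, o, PI p) /\ ~ In t (Gt G)
  | @At4 _ _ _ o t => work_ok h c TI PI G p o t
  | @At5 _ _ _ o t => work_ok h c TI PI G p o t
  | @At13 _ _ _ o t _ _ => work_ok h c TI PI G p o t
  | @At6 _ _ _ o t sv => work_ok h c TI PI G p o t /\ HistS G TI sv
  | @At7 _ _ _ o t sv => work_ok h c TI PI G p o t /\ HistS G TI sv /\ (cS c = sv -> Hnn (cH c) sv)
  | @At8 _ _ _ o t sv => work_ok h c TI PI G p o t /\ HistS G TI sv /\ (cS c = sv -> Hnn (cH c) sv)
  | @At9 _ _ _ o t sv av => work_ok h c TI PI G p o t /\ HistS G TI sv /\ (cS c = sv -> Hnn (cH c) sv) /\ AV TI av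
  | @At12 _ _ _ o t sv av s' r' => work_ok h c TI PI G p o t /\ HistS G TI sv /\
      (cS c = sv -> Hnn (cH c) sv /\ exists ta oa q i, av = (ta, Some oa, Some q) /\ TI ta = Some (q, oa, i) /\
         ~ In ta (Gt G) /\ delta (prevst G (length G)) oa s' r' /\ cH c q = (ta, RN) /\ inwork4 (cpc c q) ta)
  | @At14 _ _ _ o t => cur h p (PI p) o /\ TI t = Some (p, o, PI p) /\ exists r, appr G t r /\ cH c p = (t, RVal r)
  end.

Record Inv h (c : cfg) (TI : tiT) (PI : proc -> nat) (G : list gT) : Prop := {
  iC : 1 <= cC c;
  iTI : forall t q o i, TI t = Some (q, o, i) -> 1 <= t < cC c /\ nth_error h i = Some (q, EInv RES o);
  iTIinj : forall t t' q q' o o' i, TI t = Some (q, o, i) -> TI t' = Some (q', o', i) -> t = t';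
  iTIcur : forall t q o i, TI t = Some (q, o, i) -> PI q = i -> cpc c q = IdleT \/ pctime (cpc c q) = Some t;
  iA : AV TI (cA c);
  iS : (G = [] /\ cS c = (0, s0, RB, None)) \/
       exists k t n s r q o i, S k = length G /\ nth_error G k = Some (t, n, s, r) /\
         cS c = (t, s, RVal r, Some q) /\ TI t = Some (q, o, i);
  iG : forall k t n s r, nth_error G k = Some (t, n, s, r) ->
        (exists q o i, TI t = Some (q, o, i) /\ i < n /\ delta (prevst G k) o s r) /\ n <= length h;
  iGnd : NoDup (Gt G);
  iGmono : forall k g g', nth_error G k = Some g -> nth_error G (S k) = Some g' -> gn RES St g <= gn RES St g';
  iH2 : forall q t, inwork4 (cpc c q) t -> cH c q = (t, RN) ->
        forall k n s r, nth_error G k = Some (t, n, s, r) -> S k = length G;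
  iWF : forall p, alternating true (proj p h);
  iResp : forall i j, resp_of h i j -> exists k t n s r q o p, nth_error G k = Some (t, n, s, r) /\
        TI t = Some (q, o, i) /\ n <= j /\ nth_error h j = Some (p, EResp OP (RVal r));
  iP : forall p, PInv h c TI PI G p
}.

Lemma inv_init : Inv [] (init_config OP RES s0) (fun _ => None) (fun _ => 0) [].
Proof.
  constructor; cbn.
  - lia.
  - intros; discriminate.
  - intros; discriminate.
  - intros; discriminate.
  - left. reflexivity.
  - left. auto.
  - intros k t n s r H. destruct k; discriminate.
  - constructor.
  - intros k g g' H. destruct k; discriminate.
  - intros q t Hw Hh k. destruct k; discriminate.
  - intros p. constructor.
  - intros i j [_ [p [o [v [H _]]]]]. destruct i; discriminate.
  - intros p. unfold PInv. cbn. split; [discriminate|]. intros l o Hl.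
    destruct l; discriminate.
Qed.



Lemma upd_eq {X} (f : proc -> X) p x : upd f p x p = x.
Proof. unfold upd. rewrite Nat.eqb_refl. reflexivity. Qed.
Lemma upd_neq {X} (f : proc -> X) p x q : q <> p -> upd f p x q = f q.
Proof. intros H. unfold upd. apply Nat.eqb_neq in H. rewrite H. reflexivity. Qed.

Lemma nth_snoc {A} (h : list A) x i : i < length h -> nth_error (h ++ [x]) i = nth_error h i.
Proof. intros. apply nth_error_app1. auto. Qed.
Lemma nth_snoc_last {A} (h : list A) x : nth_error (h ++ [x]) (length h) = Some x.
Proof. rewrite nth_error_app2 by lia. rewrite Nat.sub_diag. reflexivity. Qed.
Lemma nth_snoc_inv {A} (h : list A) x i y : nth_error (h ++ [x]) i = Some y ->
  (i < length h /\ nth_error h i = Some y) \/ (i = length h /\ y = x).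
Proof.
  intros H. destruct (Nat.lt_ge_cases i (length h)).
  - left. rewrite nth_error_app1 in H; auto.
  - right. rewrite nth_error_app2 in H by lia. destruct (i - length h) eqn:E; simpl in H.
    + inversion H. split; auto. lia.
    + destruct n; discriminate.
Qed.

Lemma cur_snoc h q i o p e : cur h q i o -> p <> q -> cur (h ++ [(p, e)]) q i o.
Proof.
  intros [H1 H2] Hpq. split.
  - rewrite nth_snoc; auto. apply nth_error_Some. congruence.
  - intros x q' e' Hx Hxe. apply nth_snoc_inv in Hxe. destruct Hxe as [[_ Hxe]|[_ Hxe]].
    + eapply H2; eauto.
    + inversion Hxe; subst. auto.
Qed.

Lemma cur_lt h q i o : cur h q i o -> i < length h.
Proof. intros [H _]. apply nth_error_Some. congruence. Qed.

Lemma proj_snoc_neq q p e h : p <> q -> proj q (h ++ [(p, e)]) = proj q h.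
Proof. intros. rewrite proj_app, proj_cons_neq by auto. apply app_nil_r. Qed.
Lemma proj_snoc_eq p e h : proj p (h ++ [(p, e)]) = proj p h ++ [e].
Proof. rewrite proj_app, proj_cons_eq. reflexivity. Qed.

Lemma resp_of_snoc h x i j : resp_of (h ++ [x]) i j -> j < length h -> resp_of h i j.
Proof.
  intros [Hij [p [o [v [H1 [H2 H3]]]]]] Hj. split; auto. exists p, o, v.
  rewrite nth_snoc in H1 by lia. rewrite nth_snoc in H2 by lia. split; auto. split; auto.
  intros k q e Hk1 Hk2 Hk. apply (H3 k q e); auto. rewrite nth_snoc by lia. auto.
Qed.

Lemma resp_of_lt h i j : resp_of h i j -> j < length h.
Proof. intros [_ [p [o [v [_ [H _]]]]]]. apply nth_error_Some. congruence. Qed.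

Lemma cur_proj h p i o : cur h p i o -> exists l, proj p h = l ++ [EInv RES o].
Proof.
  intros [Hi Hnl]. destruct (nthsplit h i _ Hi) as [Hs _].
  exists (proj p (firstn i h)). rewrite Hs at 1. rewrite proj_app, proj_cons_eq.
  f_equal. f_equal. apply proj_nil_of. intros [q e] Hin Hq. simpl in Hq. subst q.
  destruct (In_nth_error _ _ Hin) as [z Hz].
  assert (Hil : i < length h) by (apply nth_error_Some; congruence).
  apply (Hnl (S i + z) p e); auto; [lia|].
  rewrite Hs, nth_error_app2; rewrite length_firstn; [|lia].
  replace (S i + z - Nat.min i (length h)) with (S z) by lia. exact Hz.
Qed.

Lemma alt_snoc_inv b (l : list evt) o : alternating b l -> (l = [] -> b = true) ->
  (forall l' o', l <> l' ++ [EInv RES o']) -> alternating b (l ++ [EInv RES o]).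
Proof.
  revert b. induction l as [|x l IH]; intros b H1 H2 H3.
  - simpl. split; auto.
  - simpl in *. destruct x as [o'|v].
    + destruct H1 as [Hb H1]. split; auto. apply IH; [exact H1| |].
      * intros ->. exfalso. apply (H3 [] o'). reflexivity.
      * intros l' o'' E. apply (H3 (EInv RES o' :: l') o''). rewrite E. reflexivity.
    + destruct H1 as [Hb H1]. split; auto. apply IH; [exact H1| |].
      * intros; reflexivity.
      * intros l' o'' E. apply (H3 (EResp OP v :: l') o''). rewrite E. reflexivity.
Qed.

Lemma HistS_mono G G' TI TI' sv : HistS G TI sv ->
  (forall t x, TI t = Some x -> TI' t = Some x) ->
  (forall k g, nth_error G k = Some g -> nth_error G' k = Some g) -> HistS G' TI' sv.
Proof.
  intros [H|[k [t [n [s [r [q [o [i [H1 [H2 H3]]]]]]]]]]] HT HG; [left; auto|].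
  right. exists k, t, n, s, r, q, o, i. auto.
Qed.

Lemma AV_mono TI TI' av : AV TI av -> (forall t x, TI t = Some x -> TI' t = Some x) -> AV TI' av.
Proof. intros [H|[ta [o [q [i [H1 H2]]]]]] HT; [left; auto|right]. exists ta, o, q, i. auto. Qed.

Lemma appr_mono G G' t r : appr G t r -> (forall k g, nth_error G k = Some g -> nth_error G' k = Some g) -> appr G' t r.
Proof. intros [k [n [s H]]] HG. exists k, n, s. auto. Qed.

Lemma inGt G t : In t (Gt G) <-> exists k n s r, nth_error G k = Some (t, n, s, r).
Proof.
  unfold Gt. split.
  - intros H. apply in_map_iff in H. destruct H as [[[[t' n] s] r] [H1 H2]]. unfold gtm in H1. simpl in H1. subst.
    destruct (In_nth_error _ _ H2) as [k Hk]. exists k, n, s, r. auto.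
  - intros [k [n [s [r H]]]]. apply in_map_iff. exists (t, n, s, r). split; auto. eapply nth_error_In; eauto.
Qed.

Lemma HistS_time G TI sv : HistS G TI sv -> fst (fst (fst sv)) = 0 \/ In (fst (fst (fst sv))) (Gt G).
Proof.
  intros [->|[k [t [n [s [r [q [o [i [H1 [H2 H3]]]]]]]]]]]; [left; reflexivity|right].
  subst. simpl. apply inGt. eauto.
Qed.

Lemma Hnn_init H : Hnn H (0, s0, RB, None).
Proof. unfold Hnn. simpl. discriminate. Qed.

Lemma PInv_mono h h' c c' TI TI' PI PI' G G' q :
  PInv h c TI PI G q ->
  cpc c' q = cpc c q -> PI' q = PI q ->
  (forall t x, TI t = Some x -> TI' t = Some x) ->
  (forall k g, nth_error G k = Some g -> nth_error G' k = Some g) ->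
  (forall i o, cur h q i o -> cur h' q i o) ->
  proj q h' = proj q h ->
  (cH c' q = cH c q \/ (snd (cH c q) = RN /\ exists r, appr G' (fst (cH c q)) r /\ cH c' q = (fst (cH c q), RVal r))) ->
  (forall o t, cpc c q = A3 o t -> ~ In t (Gt G) -> ~ In t (Gt G')) ->
  (forall sv, HistS G TI sv -> cS c' = sv -> cS c = sv /\ G' = G /\ (Hnn (cH c) sv -> Hnn (cH c') sv) /\
     (forall q' ta o i, TI ta = Some (q', o, i) -> ~ In ta (Gt G) -> cH c q' = (ta, RN) ->
        inwork4 (cpc c q') ta -> cH c' q' = (ta, RN) /\ inwork4 (cpc c' q') ta)) ->
  PInv h' c' TI' PI' G' q.
Proof.
  intros HP Hpc HPI HTI HG Hcur Hproj HH H3 HS.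
  assert (Hw : forall o t, work_ok h c TI PI G q o t -> work_ok h' c' TI' PI' G' q o t).
  { intros o t [W1 [W2 [W3 W4]]]. rewrite <- HPI in W1, W2. split; [auto|]. split; [auto|].
    destruct HH as [HH|[HH1 [r [HH2 HH3]]]].
    - rewrite HH. split; auto. destruct W4 as [W4|[r [W5 W6]]]; [left; auto|right].
      exists r. split; auto. eapply appr_mono; eauto.
    - rewrite HH3. simpl. split; auto. right. exists r. split; auto. congruence. }
  assert (Hnr : snd (cH c q) <> RN -> snd (cH c' q) <> RN).
  { intros Hn. destruct HH as [HH|[HH1 _]]; [rewrite HH; auto|contradiction]. }
  unfold PInv in *. rewrite Hpc. destruct (cpc c q) eqn:Epc.
  - destruct HP as [HP1 HP2]. split; auto. rewrite Hproj. auto.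
  - destruct HP as [HP1 HP2]. split; auto. rewrite HPI. auto.
  - destruct HP as [HP1 [HP2 [HP3 HP4]]]. split; auto. rewrite HPI. split; auto. split; auto.
    eapply H3; eauto.
  - auto.
  - auto.
  - destruct HP as [HP1 HP2]. split; auto. eapply HistS_mono; eauto.
  - destruct HP as [HP1 [HP2 HP3]]. split; auto. split; [eapply HistS_mono; eauto|].
    intros E. destruct (HS _ HP2 E) as [E1 [_ [E3 _]]]. auto.
  - destruct HP as [HP1 [HP2 HP3]]. split; auto. split; [eapply HistS_mono; eauto|].
    intros E. destruct (HS _ HP2 E) as [E1 [_ [E3 _]]]. auto.
  - destruct HP as [HP1 [HP2 [HP3 HP4]]]. split; auto. split; [eapply HistS_mono; eauto|].
    split; [|eapply AV_mono; eauto].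
    intros E. destruct (HS _ HP2 E) as [E1 [_ [E3 _]]]. auto.
  - destruct HP as [HP1 [HP2 HP3]]. split; auto. split; [eapply HistS_mono; eauto|].
    intros E. destruct (HS _ HP2 E) as [E1 [E2 [E3 E4]]]. subst G'.
    destruct (HP3 E1) as [K1 [ta [oa [q' [i [K2 [K3 [K4 [K5 [K6 K7]]]]]]]]]].
    split; auto. exists ta, oa, q', i. split; auto. split; auto. split; auto. split; auto.
    eapply E4; eauto.
  - auto.
  - destruct HP as [HP1 [HP2 [r [HP3 HP4]]]]. rewrite HPI. split; auto. split; auto.
    exists r. split; [eapply appr_mono; eauto|].
    destruct HH as [HH|[HH1 _]]; [rewrite HH; auto|]. rewrite HP4 in HH1. discriminate.
Qed.


Lemma PInv_RN h c TI PI G q : PInv h c TI PI G q -> snd (cH c q) = RN ->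
  exists o, inwork4 (cpc c q) (fst (cH c q)) /\ TI (fst (cH c q)) = Some (q, o, PI q).
Proof.
  unfold PInv. intros HP Hn. destruct (cpc c q) eqn:E; simpl;
  try (destruct HP as [HP _]; contradiction);
  try (destruct HP as [[_ [W2 [W3 _]]] _]; exists o; rewrite W3; split; auto; fail);
  try (destruct HP as [_ [W2 [W3 _]]]; exists o; rewrite W3; split; auto; fail).
  destruct HP as [_ [_ [r [_ HP]]]]. rewrite HP in Hn. discriminate.
Qed.

Lemma TI_fun TI t q o i q' o' i' : TI t = Some (q, o, i) -> TI t = Some (q', o', i') -> q = q' /\ o = o' /\ i = i'.
Proof. intros H1 H2. rewrite H1 in H2. inversion H2. auto. Qed.

Lemma inv_key h c TI PI G sv ta q oa i : Inv h c TI PI G -> cS c = sv -> Hnn (cH c) sv ->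
  TI ta = Some (q, oa, i) -> cH c q = (ta, RN) -> ~ In ta (Gt G) /\ inwork4 (cpc c q) ta.
Proof.
  intros HI HS Hn Hta Hq.
  destruct (PInv_RN _ _ _ _ _ _ (iP _ _ _ _ _ HI q)) as [o [Hw Ht]]; [rewrite Hq; reflexivity|].
  rewrite Hq in Hw, Ht. simpl in Hw, Ht. split; auto.
  intros Hin. apply inGt in Hin. destruct Hin as [k [n [s [r Hk]]]].
  pose proof (iH2 _ _ _ _ _ HI q ta Hw Hq k n s r Hk) as Hlast.
  destruct (iS _ _ _ _ _ HI) as [[HG _]|[k' [t' [n' [s' [r' [q' [o' [i' [E1 [E2 [E3 E4]]]]]]]]]]]].
  - subst G. destruct k; discriminate.
  - assert (k' = k) by lia. subst k'. rewrite Hk in E2. inversion E2; subst t' n' s' r'.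
    destruct (TI_fun _ _ _ _ _ _ _ _ Hta E4) as [<- _].
    subst sv. unfold Hnn in Hn. rewrite E3 in Hn. simpl in Hn. auto.
Qed.

Lemma inv_state h c TI PI G : Inv h c TI PI G -> snd (fst (fst (cS c))) = prevst G (length G).
Proof.
  intros HI. destruct (iS _ _ _ _ _ HI) as [[HG HS]|[k [t [n [s [r [q [o [i [E1 [E2 [E3 E4]]]]]]]]]]]].
  - subst G. rewrite HS. reflexivity.
  - rewrite E3, <- E1. simpl. rewrite E2. reflexivity.
Qed.

Lemma inv_HistS h c TI PI G : Inv h c TI PI G -> HistS G TI (cS c).
Proof.
  intros HI. destruct (iS _ _ _ _ _ HI) as [[HG HS]|[k [t [n [s [r [q [o [i [E1 [E2 [E3 E4]]]]]]]]]]]].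
  - left. auto.
  - right. exists k, t, n, s, r, q, o, i. auto.
Qed.

Lemma HistS_ne G TI sv ta s r q : HistS G TI sv -> ~ In ta (Gt G) -> 1 <= ta -> sv <> (ta, s, r, q).
Proof.
  intros HH Hn Ht E. destruct (HistS_time _ _ _ HH) as [H|H]; subst sv; simpl in H; [lia|auto].
Qed.

Lemma inv_localA h c TI PI G p x a :
  Inv h c TI PI G ->
  AV TI a -> PInv h (Config (cC c) a (cS c) (cH c) (upd (cpc c) p x)) TI PI G p ->
  cpc c p <> IdleT ->
  pctime x = pctime (cpc c p) ->
  (forall t, inwork4 (cpc c p) t -> cH c p = (t, RN) -> inwork4 x t) ->
  (forall t, inwork4 x t -> inwork4 (cpc c p) t) ->
  Inv h (Config (cC c) a (cS c) (cH c) (upd (cpc c) p x)) TI PI G.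
Proof.
  intros HI HA HP HnI Hpt Hw1 Hw2.
  assert (Hpc : forall q, q <> p -> cpc (Config (cC c) a (cS c) (cH c) (upd (cpc c) p x)) q = cpc c q).
  { intros q Hq. simpl. apply upd_neq; auto. }
  assert (Hpp : cpc (Config (cC c) a (cS c) (cH c) (upd (cpc c) p x)) p = x) by (simpl; apply upd_eq).
  destruct HI; constructor; cbn [cpc cH cS cA cC]; auto.
  - intros t q o i Ht Hi. destruct (Nat.eq_dec q p) as [->|Hq].
    + rewrite upd_eq. right. destruct (iTIcur0 t p o i Ht Hi) as [E|E]; [contradiction|]. congruence.
    + rewrite upd_neq by auto. eauto.
  - intros q t Hw Hh. destruct (Nat.eq_dec q p) as [->|Hq].
    + rewrite upd_eq in Hw. eapply iH3; eauto.
    + rewrite upd_neq in Hw by auto. eapply iH3; eauto.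
  - intros q. destruct (Nat.eq_dec q p) as [->|Hq]; auto.
    apply (PInv_mono h h c _ TI TI PI PI G G q); auto.
    + intros sv _ E. simpl in E. split; auto. split; auto. split; auto.
      intros q' ta o i _ _ Hh Hw. split; auto. destruct (Nat.eq_dec q' p) as [->|Hq'].
      * cbn [cpc]. rewrite upd_eq. auto.
      * cbn [cpc]. rewrite upd_neq; auto.
Qed.

Lemma inv_local h c TI PI G p x :
  Inv h c TI PI G ->
  PInv h (set_pc c p x) TI PI G p ->
  cpc c p <> IdleT ->
  pctime x = pctime (cpc c p) ->
  (forall t, inwork4 (cpc c p) t -> cH c p = (t, RN) -> inwork4 x t) ->
  (forall t, inwork4 x t -> inwork4 (cpc c p) t) ->
  Inv h (set_pc c p x) TI PI G.
Proof. intros HI; intros. apply inv_localA; auto. apply (iA _ _ _ _ _ HI). Qed.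


Ltac pinv_new := unfold PInv, set_pc; cbn [cpc cH cS cA cC]; rewrite upd_eq.

Lemma l_st4_loop h c TI PI G p o t : Inv h c TI PI G -> cpc c p = A4 o t -> Inv h (set_pc c p (A5 o t)) TI PI G.
Proof.
  intros HI E. pose proof (iP _ _ _ _ _ HI p) as HP. unfold PInv in HP. rewrite E in HP.
  apply inv_local; auto; rewrite ?E; try discriminate; try reflexivity; [pinv_new; exact HP| |]; simpl; auto.
Qed.

Lemma l_st4_exit h c TI PI G p o t : Inv h c TI PI G -> cpc c p = A4 o t -> cH c p <> (t, RN) ->
  Inv h (set_pc c p (A14 o t)) TI PI G.
Proof.
  intros HI E Hn. pose proof (iP _ _ _ _ _ HI p) as HP. unfold PInv in HP. rewrite E in HP.
  destruct HP as [W1 [W2 [W3 W4]]].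
  apply inv_local; auto; rewrite ?E; try discriminate; try reflexivity.
  - pinv_new. split; auto. split; auto. destruct W4 as [W4|[r [W5 W6]]].
    + exfalso. apply Hn. rewrite <- W3, <- W4. destruct (cH c p); reflexivity.
    + exists r. split; auto. rewrite <- W3, <- W6. destruct (cH c p); reflexivity.
  - simpl. intros t' Ht' Hh. inversion Ht'; subst. contradiction.
  - simpl. tauto.
Qed.

Lemma l_st5 h c TI PI G p o t : Inv h c TI PI G -> cpc c p = A5 o t -> Inv h (set_pc c p (A6 o t (cS c))) TI PI G.
Proof.
  intros HI E. pose proof (iP _ _ _ _ _ HI p) as HP. unfold PInv in HP. rewrite E in HP.
  apply inv_local; auto; rewrite ?E; try discriminate; try reflexivity; [|simpl; auto|simpl; auto].
  pinv_new. split; [exact HP|]. eapply inv_HistS; eauto.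
Qed.

Lemma l_st6_fail h c TI PI G p o t ts ss rs q : Inv h c TI PI G -> cpc c p = A6 o t (ts, ss, rs, q) ->
  deref (cH c) q <> (ts, RN) -> Inv h (set_pc c p (A7 o t (ts, ss, rs, q))) TI PI G.
Proof.
  intros HI E Hd. pose proof (iP _ _ _ _ _ HI p) as HP. unfold PInv in HP. rewrite E in HP.
  apply inv_local; auto; rewrite ?E; try discriminate; try reflexivity; [|simpl; auto|simpl; auto].
  pinv_new. destruct HP as [HP1 HP2]. split; [exact HP1|]. split; auto.
Qed.

Lemma l_st7_fail h c TI PI G p o t sv : Inv h c TI PI G -> cpc c p = A7 o t sv ->
  Inv h (set_pc c p (A8 o t sv)) TI PI G.
Proof.
  intros HI E. pose proof (iP _ _ _ _ _ HI p) as HP. unfold PInv in HP. rewrite E in HP.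
  apply inv_local; auto; rewrite ?E; try discriminate; try reflexivity; [|simpl; auto|simpl; auto].
  pinv_new. exact HP.
Qed.

Lemma l_st8 h c TI PI G p o t sv : Inv h c TI PI G -> cpc c p = A8 o t sv ->
  Inv h (set_pc c p (A9 o t sv (cA c))) TI PI G.
Proof.
  intros HI E. pose proof (iP _ _ _ _ _ HI p) as HP. unfold PInv in HP. rewrite E in HP.
  apply inv_local; auto; rewrite ?E; try discriminate; try reflexivity; [|simpl; auto|simpl; auto].
  pinv_new. destruct HP as [HP1 [HP2 HP3]]. split; [exact HP1|]. split; auto. split; auto.
  apply (iA _ _ _ _ _ HI).
Qed.

Lemma l_st9_apply h c TI PI G p o t ts ss rs qs ta oa qa s' r' : Inv h c TI PI G ->
  cpc c p = A9 o t (ts, ss, rs, qs) (ta, Some oa, qa) ->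
  deref (cH c) qa = (ta, RN) -> delta ss oa s' r' ->
  Inv h (set_pc c p (A12 o t (ts, ss, rs, qs) (ta, Some oa, qa) s' r')) TI PI G.
Proof.
  intros HI E Hd Hdel. pose proof (iP _ _ _ _ _ HI p) as HP. unfold PInv in HP. rewrite E in HP.
  apply inv_local; auto; rewrite ?E; try discriminate; try reflexivity; [|simpl; auto|simpl; auto].
  pinv_new. destruct HP as [HP1 [HP2 [HP3 HP4]]]. split; [exact HP1|]. split; auto.
  intros ES. split; auto.
  destruct HP4 as [HA|[ta' [oa' [q [i [HA1 HA2]]]]]]; [discriminate|]. inversion HA1; subst ta' oa' qa.
  simpl in Hd. destruct (inv_key _ _ _ _ _ _ _ _ _ _ HI ES (HP3 ES) HA2 Hd) as [K1 K2].
  exists ta, oa, q, i. split; auto. split; auto. split; auto. split; [|split; auto].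
  - rewrite <- (inv_state _ _ _ _ _ HI). rewrite ES. exact Hdel.
  - destruct (Nat.eq_dec q p) as [->|Hq].
    + rewrite upd_eq. rewrite E in K2. exact K2.
    + rewrite upd_neq; auto.
Qed.

Lemma l_st9_else h c TI PI G p o t sv ta oa qa : Inv h c TI PI G -> cpc c p = A9 o t sv (ta, oa, qa) ->
  Inv h (set_pc c p (A13 o t sv (ta, oa, qa))) TI PI G.
Proof.
  intros HI E. pose proof (iP _ _ _ _ _ HI p) as HP. unfold PInv in HP. rewrite E in HP.
  apply inv_local; auto; rewrite ?E; try discriminate; try reflexivity; [|simpl; auto|simpl; auto].
  pinv_new. apply HP.
Qed.

Lemma l_st12_fail h c TI PI G p o t sv av s' r' : Inv h c TI PI G -> cpc c p = A12 o t sv av s' r' ->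
  Inv h (set_pc c p (A4 o t)) TI PI G.
Proof.
  intros HI E. pose proof (iP _ _ _ _ _ HI p) as HP. unfold PInv in HP. rewrite E in HP.
  apply inv_local; auto; rewrite ?E; try discriminate; try reflexivity; [|simpl; auto|simpl; auto].
  pinv_new. apply HP.
Qed.

Lemma l_st13_fail h c TI PI G p o t sv av : Inv h c TI PI G -> cpc c p = A13 o t sv av ->
  Inv h (set_pc c p (A4 o t)) TI PI G.
Proof.
  intros HI E. pose proof (iP _ _ _ _ _ HI p) as HP. unfold PInv in HP. rewrite E in HP.
  apply inv_local; auto; rewrite ?E; try discriminate; try reflexivity; [|simpl; auto|simpl; auto].
  pinv_new. apply HP.
Qed.


Ltac pinv_newA := unfold PInv; cbn [cpc cH cS cA cC]; rewrite upd_eq.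

Lemma l_st7_succ h c TI PI G p o t sv : Inv h c TI PI G -> cpc c p = A7 o t sv ->
  Inv h (Config (cC c) (t, Some o, Some p) (cS c) (cH c) (upd (cpc c) p (A8 o t sv))) TI PI G.
Proof.
  intros HI E. pose proof (iP _ _ _ _ _ HI p) as HP. unfold PInv in HP. rewrite E in HP.
  apply inv_localA; auto; rewrite ?E; try discriminate; try reflexivity; [| |simpl; auto|simpl; auto].
  - destruct HP as [[_ [W2 _]] _]. right. exists t, o, p, (PI p). auto.
  - pinv_newA. exact HP.
Qed.

Lemma l_st13_succ h c TI PI G p o t sv av : Inv h c TI PI G -> cpc c p = A13 o t sv av ->
  Inv h (Config (cC c) (t, Some o, Some p) (cS c) (cH c) (upd (cpc c) p (A4 o t))) TI PI G.
Proof.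
  intros HI E. pose proof (iP _ _ _ _ _ HI p) as HP. unfold PInv in HP. rewrite E in HP.
  apply inv_localA; auto; rewrite ?E; try discriminate; try reflexivity; [| |simpl; auto|simpl; auto].
  - destruct HP as [_ [W2 _]]. right. exists t, o, p, (PI p). auto.
  - pinv_newA. exact HP.
Qed.

Lemma resp_new h p i o e i' : cur h p i o -> resp_of (h ++ [(p, e)]) i' (length h) -> i' = i.
Proof.
  intros [Hi Hnl] [Hlt [p' [o' [v [H1 [H2 H3]]]]]].
  rewrite nth_snoc_last in H2. inversion H2; subst p'.
  rewrite nth_snoc in H1 by lia.
  assert (Hil : i < length h) by (apply nth_error_Some; congruence).
  destruct (lt_eq_lt_dec i' i) as [[Hl|Hl]|Hl]; auto; exfalso.
  - apply (H3 i p (EInv RES o)); auto. rewrite nth_snoc; auto.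
  - apply (Hnl i' p (EInv RES o')); auto.
Qed.

Lemma l_st1 h c TI PI G p o : Inv h c TI PI G -> cpc c p = IdleT ->
  Inv (h ++ [(p, EInv RES o)]) (set_pc c p (A2 o)) TI (upd PI p (length h)) G.
Proof.
  intros HI E. pose proof (iP _ _ _ _ _ HI p) as HP. unfold PInv in HP. rewrite E in HP.
  destruct HP as [HP1 HP2].
  assert (Hnth : forall i x, nth_error h i = Some x -> nth_error (h ++ [(p, EInv RES o)]) i = Some x).
  { intros i x Hx. rewrite nth_snoc; auto. apply nth_error_Some. congruence. }
  destruct HI; constructor; unfold set_pc; cbn [cpc cH cS cA cC]; auto.
  - intros t q o' i Ht. destruct (iTI0 t q o' i Ht). auto.
  - intros t q o' i Ht Hi. destruct (Nat.eq_dec q p) as [->|Hq].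
    + rewrite upd_eq in Hi. destruct (iTI0 t p o' i Ht) as [_ Hn].
      assert (i < length h) by (apply nth_error_Some; congruence). lia.
    + rewrite upd_neq in Hi by auto. rewrite upd_neq by auto. eauto.
  - intros k t n s r Hk. destruct (iG0 k t n s r Hk) as [A1 A2]. split; auto. rewrite length_app. lia.
  - intros q t Hw Hh. destruct (Nat.eq_dec q p) as [->|Hq].
    + rewrite upd_eq in Hw. destruct Hw.
    + rewrite upd_neq in Hw by auto. eapply iH3; eauto.
  - intros q. destruct (Nat.eq_dec q p) as [->|Hq].
    + rewrite proj_snoc_eq. apply alt_snoc_inv; auto.
    + rewrite proj_snoc_neq; auto.
  - intros i j Hr. pose proof (resp_of_lt _ _ _ Hr) as Hj. rewrite length_app in Hj. simpl in Hj.
    destruct (Nat.eq_dec j (length h)) as [->|Hj'].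
    + exfalso. destruct Hr as [_ [p' [o' [v [_ [H2 _]]]]]]. rewrite nth_snoc_last in H2. discriminate.
    + destruct (iResp0 i j) as [k [t [n [s [r [q [o' [p' [A1 [A2 [A3 A4]]]]]]]]]]].
      * apply (resp_of_snoc _ _ _ _ Hr). lia.
      * exists k, t, n, s, r, q, o', p'. repeat split; auto.
  - intros q. destruct (Nat.eq_dec q p) as [->|Hq].
    + pinv_new. split; auto. rewrite upd_eq. split; [apply nth_snoc_last|].
      intros x q' e Hx Hxe. exfalso. assert (x < length (h ++ [(p, EInv RES o)])) by (apply nth_error_Some; congruence).
      rewrite length_app in H. simpl in H. lia.
    + apply (PInv_mono h _ c _ TI TI PI _ G G q); auto.
      * cbn [cpc]. apply upd_neq; auto.
      * apply upd_neq; auto.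
      * intros i o' Hc. apply cur_snoc; auto.
      * apply proj_snoc_neq; auto.
      * intros sv _ ES. cbn [cS] in ES. split; auto. split; auto. split; auto.
        intros q' ta o' i _ _ Hh Hw. split; auto. cbn [cpc]. destruct (Nat.eq_dec q' p) as [->|Hq'].
        -- rewrite E in Hw. destruct Hw.
        -- rewrite upd_neq; auto.
Qed.


Lemma l_st2 h c TI PI G p o : Inv h c TI PI G -> cpc c p = A2 o ->
  Inv h (Config (S (cC c)) (cA c) (cS c) (cH c) (upd (cpc c) p (A3 o (cC c))))
      (fun t => if Nat.eqb t (cC c) then Some (p, o, PI p) else TI t) PI G.
Proof.
  intros HI E. pose proof (iP _ _ _ _ _ HI p) as HP. unfold PInv in HP. rewrite E in HP.
  destruct HP as [HP1 HP2].
  set (TI' := fun t => if Nat.eqb t (cC c) then Some (p, o, PI p) else TI t).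
  assert (HTI : forall t x, TI t = Some x -> TI' t = Some x).
  { intros t [[q o'] i] Ht. unfold TI'. destruct (iTI _ _ _ _ _ HI t q o' i Ht) as [[_ Hlt] _].
    destruct (Nat.eqb_spec t (cC c)); [lia|auto]. }
  assert (HTIc : TI' (cC c) = Some (p, o, PI p)) by (unfold TI'; rewrite Nat.eqb_refl; auto).
  assert (HTIinv : forall t x, TI' t = Some x -> (t = cC c /\ x = (p, o, PI p)) \/ (t <> cC c /\ TI t = Some x)).
  { intros t x Ht. unfold TI' in Ht. destruct (Nat.eqb_spec t (cC c)); [left|right]; split; auto; congruence. }
  assert (Hnew : forall t q o' i, TI t = Some (q, o', i) -> i = PI p -> False).
  { intros t q o' i Ht Hi. destruct (iTI _ _ _ _ _ HI t q o' i Ht) as [_ Hn]. subst i.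
    destruct HP2 as [Hc _]. rewrite Hc in Hn. inversion Hn; subst q.
    destruct (iTIcur _ _ _ _ _ HI t p o' (PI p) Ht eq_refl) as [E'|E']; rewrite E in E'; discriminate. }
  fold TI'. pose proof HI as HI0. destruct HI; constructor; cbn [cpc cH cS cA cC]; auto.
  - intros t q o' i Ht. apply HTIinv in Ht. destruct Ht as [[-> Hx]|[Hne Ht]].
    + inversion Hx; subst. split; [lia|]. apply HP2.
    + destruct (iTI0 t q o' i Ht). split; auto. lia.
  - intros t t' q q' o1 o2 i H1 H2. apply HTIinv in H1. apply HTIinv in H2.
    destruct H1 as [[-> Hx]|[Hne H1]]; destruct H2 as [[-> Hx']|[Hne' H2]]; auto.
    + inversion Hx; subst. exfalso. eapply Hnew; eauto.
    + inversion Hx'; subst. exfalso. eapply Hnew; eauto.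
    + eauto.
  - intros t q o' i Ht Hi. apply HTIinv in Ht. destruct Ht as [[-> Hx]|[Hne Ht]].
    + inversion Hx; subst. rewrite upd_eq. right. reflexivity.
    + destruct (Nat.eq_dec q p) as [->|Hq].
      * exfalso. eapply Hnew; eauto.
      * rewrite upd_neq by auto. eauto.
  - eapply AV_mono; eauto.
  - destruct iS0 as [A|[k [t [n [s [r [q [o' [i [A1 [A2 [A3 A4]]]]]]]]]]]]; [left; auto|right].
    exists k, t, n, s, r, q, o', i. auto.
  - intros k t n s r Hk. destruct (iG0 k t n s r Hk) as [[q [o' [i [A1 A2]]]] A3]. split; auto.
    exists q, o', i. auto.
  - intros q t Hw Hh. destruct (Nat.eq_dec q p) as [->|Hq].
    + rewrite upd_eq in Hw. destruct Hw.
    + rewrite upd_neq in Hw by auto. eapply iH3; eauto.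
  - intros i j Hr. destruct (iResp0 i j Hr) as [k [t [n [s [r [q [o' [p' [A1 [A2 [A3 A4]]]]]]]]]]].
    exists k, t, n, s, r, q, o', p'. auto.
  - intros q. destruct (Nat.eq_dec q p) as [->|Hq].
    + pinv_newA. split; auto. split; auto. split; auto. intros Hin. apply inGt in Hin.
      destruct Hin as [k [n [s [r Hk]]]]. destruct (iG0 k _ _ _ _ Hk) as [[q [o' [i [A1 _]]]] _].
      destruct (iTI0 _ _ _ _ A1). lia.
    + apply (PInv_mono h h c _ TI TI' PI PI G G q); auto.
      * cbn [cpc]. apply upd_neq; auto.
      * intros sv _ ES. cbn [cS] in ES. split; auto. split; auto. split; auto.
        intros q' ta o' i _ _ Hh Hw. split; auto. cbn [cpc]. destruct (Nat.eq_dec q' p) as [->|Hq'].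
        -- rewrite E in Hw. destruct Hw.
        -- rewrite upd_neq; auto.
Qed.


Lemma l_st3 h c TI PI G p o t : Inv h c TI PI G -> cpc c p = A3 o t ->
  Inv h (Config (cC c) (cA c) (cS c) (upd (cH c) p (t, RN)) (upd (cpc c) p (A4 o t))) TI PI G.
Proof.
  intros HI E. pose proof (iP _ _ _ _ _ HI p) as HP. unfold PInv in HP. rewrite E in HP.
  destruct HP as [HP1 [HP2 [HP3 HP4]]].
  assert (Ht1 : 1 <= t) by (destruct (iTI _ _ _ _ _ HI _ _ _ _ HP3) as [A _]; lia).
  pose proof HI as HI0. destruct HI; constructor; cbn [cpc cH cS cA cC]; auto.
  - intros t' q o' i Ht Hi. destruct (Nat.eq_dec q p) as [->|Hq].
    + rewrite upd_eq. right. destruct (iTIcur0 t' p o' i Ht Hi) as [E'|E']; rewrite E in E'; [discriminate|exact E'].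
    + rewrite upd_neq by auto. eauto.
  - intros q t' Hw Hh k n s r Hk. destruct (Nat.eq_dec q p) as [->|Hq].
    + rewrite upd_eq in Hw; rewrite upd_eq in Hh. inversion Hh; subst t'. exfalso. apply HP4. apply inGt. eauto.
    + rewrite upd_neq in Hw by auto; rewrite upd_neq in Hh by auto. eapply iH3; eauto.
  - intros q. destruct (Nat.eq_dec q p) as [->|Hq].
    + pinv_newA. unfold work_ok. cbn [cH]. rewrite upd_eq. split; auto.
    + apply (PInv_mono h h c _ TI TI PI PI G G q); auto.
      * cbn [cpc]. apply upd_neq; auto.
      * left. cbn [cH]. apply upd_neq; auto.
      * intros sv Hsv ES. cbn [cS] in ES. split; auto. split; auto. split.
        -- unfold Hnn. cbn [cH]. destruct sv as [[[ts ss] rs] qs]. simpl.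
           destruct qs as [q'|]; simpl; auto. destruct (Nat.eq_dec q' p) as [->|Hq'].
           ++ rewrite upd_eq. intros _ Heq. inversion Heq; subst.
              destruct (HistS_time _ _ _ Hsv) as [H0|H0]; simpl in H0; [lia|contradiction].
           ++ rewrite upd_neq; auto.
        -- intros q' ta o' i _ _ Hh Hw. cbn [cpc cH]. destruct (Nat.eq_dec q' p) as [->|Hq'].
           ++ rewrite E in Hw. destruct Hw.
           ++ rewrite !upd_neq; auto.
Qed.


Lemma work_ok_H h c c' TI PI G p o t : work_ok h c TI PI G p o t ->
  (cH c' p = cH c p \/ (snd (cH c p) = RN /\ exists r, appr G (fst (cH c p)) r /\ cH c' p = (fst (cH c p), RVal r))) ->
  work_ok h c' TI PI G p o t.
Proof.
  intros [W1 [W2 [W3 W4]]] [HH|[HH1 [r [HH2 HH3]]]].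
  - unfold work_ok. rewrite HH. auto.
  - unfold work_ok. rewrite HH3. simpl. split; auto. split; auto. split; auto. right. exists r. split; auto. congruence.
Qed.

Lemma l_st6_succ h c TI PI G p o t ts ss rs q : Inv h c TI PI G -> cpc c p = A6 o t (ts, ss, rs, Some q) ->
  cH c q = (ts, RN) ->
  Inv h (Config (cC c) (cA c) (cS c) (upd (cH c) q (ts, rs)) (upd (cpc c) p (A7 o t (ts, ss, rs, Some q)))) TI PI G.
Proof.
  intros HI E Hq. pose proof (iP _ _ _ _ _ HI p) as HP. unfold PInv in HP. rewrite E in HP.
  destruct HP as [HP1 HP2].
  destruct HP2 as [HP2|[k [t' [n [s [r [q' [o' [i [A1 [A2 A3]]]]]]]]]]]; [discriminate|].
  inversion A2; subst t' s rs q'.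
  assert (Happr : appr G ts r) by (exists k, n, ss; auto).
  assert (HinG : In ts (Gt G)) by (apply inGt; eauto).
  set (c' := Config (cC c) (cA c) (cS c) (upd (cH c) q (ts, RVal r)) (upd (cpc c) p (A7 o t (ts, ss, RVal r, Some q)))).
  assert (HH : forall q'', cH c' q'' = cH c q'' \/
      (snd (cH c q'') = RN /\ exists r0, appr G (fst (cH c q'')) r0 /\ cH c' q'' = (fst (cH c q''), RVal r0))).
  { intros q''. unfold c'. cbn [cH]. destruct (Nat.eq_dec q'' q) as [->|Hne].
    - right. rewrite upd_eq, Hq. simpl. split; auto. exists r. auto.
    - left. apply upd_neq; auto. }
  assert (Hnn' : forall sv, Hnn (cH c) sv -> Hnn (cH c') sv).
  { intros [[[ts' ss'] rs'] qs] Hn. unfold Hnn in *. simpl in *. destruct qs as [q''|]; simpl in *; auto.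
    unfold c'. cbn [cH]. destruct (Nat.eq_dec q'' q) as [->|Hne].
    - rewrite upd_eq. discriminate.
    - rewrite upd_neq; auto. }
  fold c'. pose proof HI as HI0. destruct HI; constructor; unfold c'; cbn [cpc cH cS cA cC]; auto.
  - intros t' q' o2 i' Ht Hi. destruct (Nat.eq_dec q' p) as [->|Hq'].
    + rewrite upd_eq. right. destruct (iTIcur0 t' p o2 i' Ht Hi) as [E'|E']; rewrite E in E'; [discriminate|exact E'].
    + rewrite upd_neq by auto. eauto.
  - intros q' t' Hw Hh. destruct (Nat.eq_dec q' q) as [->|Hne].
    + rewrite upd_eq in Hh. discriminate.
    + rewrite upd_neq in Hh by auto. destruct (Nat.eq_dec q' p) as [->|Hq'].
      * rewrite upd_eq in Hw. eapply iH3; eauto. rewrite E. exact Hw.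
      * rewrite upd_neq in Hw by auto. eapply iH3; eauto.
  - intros q''. destruct (Nat.eq_dec q'' p) as [->|Hq''].
    + pinv_newA. split; [apply (work_ok_H h c c' TI PI G p o t HP1 (HH p))|]. split.
      * right. exists k, ts, n, ss, r, q, o', i. auto.
      * intros _. unfold Hnn. simpl. rewrite upd_eq. discriminate.
    + apply (PInv_mono h h c c' TI TI PI PI G G q''); auto.
      * unfold c'. cbn [cpc]. apply upd_neq; auto.
      * intros sv Hsv ES. unfold c' in ES. cbn [cS] in ES. split; auto. split; auto. split; auto.
        intros q' ta o'' i' _ Hn Hh Hw. unfold c'. cbn [cpc cH]. destruct (Nat.eq_dec q' q) as [->|Hne].
        -- rewrite Hq in Hh. inversion Hh; subst ta. contradiction.
        -- rewrite upd_neq by auto. split; auto. destruct (Nat.eq_dec q' p) as [->|Hq'].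
           ++ rewrite upd_eq. rewrite E in Hw. exact Hw.
           ++ rewrite upd_neq; auto.
Qed.


Lemma work_ok_G h c TI PI G G' p o t : work_ok h c TI PI G p o t ->
  (forall k g, nth_error G k = Some g -> nth_error G' k = Some g) -> work_ok h c TI PI G' p o t.
Proof.
  intros [W1 [W2 [W3 W4]]] HG. split; auto. split; auto. split; auto.
  destruct W4 as [W4|[r [W5 W6]]]; [left; auto|right]. exists r. split; auto. eapply appr_mono; eauto.
Qed.

Lemma prevst_snoc G g k : k <= length G -> prevst (G ++ [g]) k = prevst G k.
Proof. intros Hk. destruct k; [reflexivity|]. simpl. rewrite nth_snoc by lia. reflexivity. Qed.

Lemma Gt_snoc G g : Gt (G ++ [g]) = Gt G ++ [gtm g].
Proof. unfold Gt. rewrite map_app. reflexivity. Qed.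

Lemma nodup_snoc {A} (l : list A) x : NoDup l -> ~ In x l -> NoDup (l ++ [x]).
Proof.
  intros H1 H2. apply (Permutation_NoDup (l := x :: l)).
  - apply Permutation_cons_append.
  - constructor; auto.
Qed.

Lemma l_st12_succ h c TI PI G p o t sv ta oa qa s' r' : Inv h c TI PI G ->
  cpc c p = A12 o t sv (ta, oa, qa) s' r' -> cS c = sv ->
  Inv h (Config (cC c) (cA c) (ta, s', RVal r', qa) (cH c) (upd (cpc c) p (A4 o t))) TI PI
      (G ++ [(ta, length h, s', r')]).
Proof.
  intros HI E ES. pose proof (iP _ _ _ _ _ HI p) as HP. unfold PInv in HP. rewrite E in HP.
  destruct HP as [HP1 [HP2 HP3]]. destruct (HP3 ES) as [Hn [ta0 [oa0 [q [i [K1 [K2 [K3 [K4 [K5 K6]]]]]]]]]].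
  inversion K1; subst ta0 oa qa. clear HP3.
  set (g := (ta, length h, s', r')).
  assert (HGs : forall k x, nth_error G k = Some x -> nth_error (G ++ [g]) k = Some x).
  { intros k x Hk. rewrite nth_snoc; auto. apply nth_error_Some. congruence. }
  destruct (iTI _ _ _ _ _ HI _ _ _ _ K2) as [Hta Hi].
  assert (Hil : i < length h) by (apply nth_error_Some; congruence).
  pose proof HI as HI0. destruct HI; constructor; cbn [cpc cH cS cA cC]; auto.
  - intros t' q' o2 i' Ht Hi'. destruct (Nat.eq_dec q' p) as [->|Hq'].
    + rewrite upd_eq. right. destruct (iTIcur0 t' p o2 i' Ht Hi') as [E'|E']; rewrite E in E'; [discriminate|exact E'].
    + rewrite upd_neq by auto. eauto.
  - right. exists (length G), ta, (length h), s', r', q, oa0, i. split; [rewrite length_app; simpl; lia|].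
    split; [apply nth_snoc_last|]. auto.
  - intros k t' n s r Hk. apply nth_snoc_inv in Hk. destruct Hk as [[Hkl Hk]|[Hkl Hk]].
    + destruct (iG0 k t' n s r Hk) as [[q' [o2 [i' [A1 [A2 A3]]]]] A4]. split; auto.
      exists q', o2, i'. split; auto. split; auto. rewrite prevst_snoc by lia. auto.
    + subst k. unfold g in Hk. inversion Hk; subst t' n s r. split; auto.
      exists q, oa0, i. split; auto. split; auto. rewrite prevst_snoc by lia. auto.
  - unfold Gt in *. rewrite map_app. apply nodup_snoc; auto.
  - intros k x y Hx Hy. apply nth_snoc_inv in Hx. apply nth_snoc_inv in Hy.
    destruct Hx as [[Hkl Hx]|[Hkl Hx]]; destruct Hy as [[Hkl' Hy]|[Hkl' Hy]]; try lia.
    + eauto.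
    + subst y. destruct x as [[[t1 n1] s1] r1]. destruct (iG0 k _ _ _ _ Hx) as [_ Hn1]. unfold gn, g. simpl. auto.
  - intros q' t' Hw Hh k n s r Hk. rewrite length_app. simpl.
    apply nth_snoc_inv in Hk. destruct Hk as [[Hkl Hk]|[Hkl Hk]]; [|lia].
    exfalso.
    assert (Hw' : inwork4 (cpc c q') t').
    { destruct (Nat.eq_dec q' p) as [->|Hq'].
      - rewrite upd_eq in Hw. rewrite E. simpl in *. exact Hw.
      - rewrite upd_neq in Hw; auto. }
    pose proof (iH3 q' t' Hw' Hh k n s r Hk) as Hlast.
    destruct iS0 as [[HG _]|[k' [t2 [n2 [s2 [r2 [q2 [o2 [i2 [B1 [B2 [B3 B4]]]]]]]]]]]]; [subst G; simpl in Hkl; lia|].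
    assert (k' = k) by lia. subst k'. rewrite Hk in B2. inversion B2; subst t2 n2 s2 r2.
    destruct (PInv_RN _ _ _ _ _ _ (iP0 q')) as [o3 [_ Ht3]]; [rewrite Hh; reflexivity|].
    rewrite Hh in Ht3. simpl in Ht3. destruct (TI_fun _ _ _ _ _ _ _ _ Ht3 B4) as [<- _].
    subst sv. unfold Hnn in Hn. rewrite B3 in Hn. simpl in Hn. auto.
  - intros i1 j Hr. destruct (iResp0 i1 j Hr) as [k [t' [n [s [r [q' [o2 [p' [A1 [A2 [A3 A4]]]]]]]]]]].
    exists k, t', n, s, r, q', o2, p'. auto.
  - intros q''. destruct (Nat.eq_dec q'' p) as [->|Hq''].
    + pinv_newA. eapply work_ok_G; eauto.
    + apply (PInv_mono h h c _ TI TI PI PI G _ q''); auto.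
      * cbn [cpc]. apply upd_neq; auto.
      * intros o2 t3 E3 Hn3. rewrite Gt_snoc. intros Hin. apply in_app_or in Hin.
        destruct Hin as [Hin|[Hin|[]]]; auto. simpl in Hin. subst t3.
        pose proof (iP0 q'') as HPq. unfold PInv in HPq. rewrite E3 in HPq.
        destruct HPq as [_ [_ [HT3 _]]]. destruct (TI_fun _ _ _ _ _ _ _ _ HT3 K2) as [<- _].
        rewrite E3 in K6. exact K6.
      * intros sv' Hsv' ES'. cbn [cS] in ES'. exfalso.
        apply (HistS_ne G TI sv' ta s' (RVal r') (Some q) Hsv'); auto. lia.
Qed.


Lemma l_st14 h c TI PI G p o t : Inv h c TI PI G -> cpc c p = A14 o t ->
  Inv (h ++ [(p, EResp OP (snd (cH c p)))]) (set_pc c p IdleT) TI PI G.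
Proof.
  intros HI E. pose proof (iP _ _ _ _ _ HI p) as HP. unfold PInv in HP. rewrite E in HP.
  destruct HP as [HP1 [HP2 [r [HP3 HP4]]]]. rewrite HP4. simpl snd.
  set (e := EResp OP (RVal r)).
  assert (Hnth : forall i x, nth_error h i = Some x -> nth_error (h ++ [(p, e)]) i = Some x).
  { intros i x Hx. rewrite nth_snoc; auto. apply nth_error_Some. congruence. }
  pose proof HI as HI0. destruct HI; constructor; unfold set_pc; cbn [cpc cH cS cA cC]; auto.
  - intros t' q o' i Ht. destruct (iTI0 t' q o' i Ht). auto.
  - intros t' q o' i Ht Hi. destruct (Nat.eq_dec q p) as [->|Hq].
    + rewrite upd_eq. left. reflexivity.
    + rewrite upd_neq by auto. eauto.
  - intros k t' n s r' Hk. destruct (iG0 k t' n s r' Hk) as [A1 A2]. split; auto. rewrite length_app. lia.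
  - intros q t' Hw Hh. destruct (Nat.eq_dec q p) as [->|Hq].
    + rewrite upd_eq in Hw. destruct Hw.
    + rewrite upd_neq in Hw by auto. eapply iH3; eauto.
  - intros q. destruct (Nat.eq_dec q p) as [->|Hq].
    + rewrite proj_snoc_eq. destruct (cur_proj _ _ _ _ HP1) as [l Hl]. rewrite Hl.
      rewrite <- app_assoc. simpl. apply alt_resp_after_inv. rewrite <- Hl. auto.
    + rewrite proj_snoc_neq; auto.
  - intros i j Hr. pose proof (resp_of_lt _ _ _ Hr) as Hj. rewrite length_app in Hj. simpl in Hj.
    destruct (Nat.eq_dec j (length h)) as [->|Hj'].
    + pose proof (resp_new _ _ _ _ _ _ HP1 Hr) as ->.
      destruct HP3 as [k [n [s Hk]]]. exists k, t, n, s, r, p, o, p. split; auto. split; auto.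
      split; [destruct (iG0 k _ _ _ _ Hk); auto|]. apply nth_snoc_last.
    + destruct (iResp0 i j) as [k [t' [n [s [r' [q [o' [p' [A1 [A2 [A3 A4]]]]]]]]]]].
      * apply (resp_of_snoc _ _ _ _ Hr). lia.
      * exists k, t', n, s, r', q, o', p'. repeat split; auto.
  - intros q. destruct (Nat.eq_dec q p) as [->|Hq].
    + pinv_new. rewrite HP4. split; [discriminate|]. intros l o' Hl.
      rewrite proj_snoc_eq in Hl. apply app_inj_tail in Hl. destruct Hl as [_ Hl]. discriminate.
    + apply (PInv_mono h _ c _ TI TI PI PI G G q); auto.
      * cbn [cpc]. apply upd_neq; auto.
      * intros i o' Hc. apply cur_snoc; auto.
      * apply proj_snoc_neq; auto.
      * intros sv _ ES. cbn [cS] in ES. split; auto. split; auto. split; auto.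
        intros q' ta o' i _ _ Hh Hw. split; auto. cbn [cpc]. destruct (Nat.eq_dec q' p) as [->|Hq'].
        -- rewrite E in Hw. destruct Hw.
        -- rewrite upd_neq; auto.
Qed.

Lemma history_snoc (tr : list (proc * option evt)) p l :
  history (tr ++ [(p, l)]) = history tr ++ match l with Some e => [(p, e)] | None => [] end.
Proof. unfold history. rewrite flat_map_app. simpl. destruct l; simpl; rewrite ?app_nil_r; reflexivity. Qed.

Lemma step_inv h c TI PI G p l c' : Inv h c TI PI G -> ustep delta c p l c' ->
  exists TI' PI' G', Inv (h ++ match l with Some e => [(p, e)] | None => [] end) c' TI' PI' G'.
Proof.
  intros HI Hs. destruct Hs; cbn iota; rewrite ?app_nil_r; do 3 eexists;
  first [ solve [eapply l_st1; eauto] | solve [eapply l_st2; eauto] | solve [eapply l_st3; eauto] | solve [eapply l_st4_loop; eauto] | solve [eapply l_st4_exit; eauto] | solve [eapply l_st5; eauto] | solve [eapply l_st6_succ; eauto] | solve [eapply l_st6_fail; eauto] | solve [eapply l_st7_succ; eauto] | solve [eapply l_st7_fail; eauto] | solve [eapply l_st8; eauto] | solve [eapply l_st9_apply; eauto] | solve [eapply l_st9_else; eauto] | solve [eapply l_st12_succ; eauto] | solve [eapply l_st12_fail; eauto] | solve [eapply l_st13_succ; eauto] | solve [eapply l_st13_fail; eauto] | solve [eapply l_st14; eauto] ].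
Qed.

Lemma reach_inv tr c : reach delta s0 tr c -> exists TI PI G, Inv (history tr) c TI PI G.
Proof.
  induction 1 as [|tr c p l c' Hr IH Hs].
  - exists (fun _ => None), (fun _ => 0), []. apply inv_init.
  - destruct IH as [TI [PI [G HI]]]. rewrite history_snoc. eapply step_inv; eauto.
Qed.

Lemma prevst_map (f : gT -> gT) G k : (forall g, gs RES St (f g) = gs RES St g) -> prevst (map f G) k = prevst G k.
Proof.
  intros Hf. destruct k; [reflexivity|]. simpl. rewrite nth_error_map.
  destruct (nth_error G k); simpl; auto.
Qed.

Theorem final tr c : reach delta s0 tr c ->
  exists h', is_completion (history tr) h' /\ linearizable_conforming delta s0 h'.
Proof.
  intros Hr. destruct (reach_inv tr c Hr) as [TI [PI [G HI]]].
  set (tinv := fun t => match TI t with Some (_, _, i) => i | None => 0 end).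
  set (f := fun g : gT => (tinv (gtm g), gn RES St g, gs RES St g, gr RES St g)).
  apply (partA OP RES St delta s0 (history tr) (map f G)).
  - intros p. apply (iWF _ _ _ _ _ HI).
  - rewrite map_map. apply (nodup_comp gtm tinv G); [apply (iGnd _ _ _ _ _ HI)|].
    intros a b Ha Hb Hab.
    destruct a as [[[ta na] sa] ra]. destruct b as [[[tb nb] sb] rb].
    destruct (In_nth_error _ _ Ha) as [ka Hka]. destruct (In_nth_error _ _ Hb) as [kb Hkb].
    destruct (iG _ _ _ _ _ HI ka _ _ _ _ Hka) as [[qa [oa [ia [Hta _]]]] _].
    destruct (iG _ _ _ _ _ HI kb _ _ _ _ Hkb) as [[qb [ob [ib [Htb _]]]] _].
    unfold tinv, gtm in Hab. simpl in Hab. rewrite Hta, Htb in Hab. subst ib.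
    unfold gtm. simpl. eapply (iTIinj _ _ _ _ _ HI); eauto.
  - intros k g Hk. rewrite nth_error_map in Hk. destruct (nth_error G k) as [[[[t n] s] r]|] eqn:Hg; [|discriminate].
    simpl in Hk. inversion Hk; subst g. clear Hk.
    destruct (iG _ _ _ _ _ HI k _ _ _ _ Hg) as [[q [o [i [Ht [Hin Hd]]]]] Hn].
    pose proof (iTI _ _ _ _ _ HI _ _ _ _ Ht) as [_ Hi].
    unfold f, tinv, gi, gn, gs, gr, gtm. simpl. rewrite Ht. split; [|split; auto].
    exists q, o. split; auto. rewrite prevst_map; auto.
  - intros k g g' Hg Hg'. rewrite nth_error_map in Hg, Hg'.
    destruct (nth_error G k) eqn:E1; [|discriminate]. destruct (nth_error G (S k)) eqn:E2; [|discriminate].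
    simpl in Hg, Hg'. inversion Hg; inversion Hg'; subst. unfold f, gn. simpl.
    apply (iGmono _ _ _ _ _ HI k _ _ E1 E2).
  - intros i j Hij. destruct (iResp _ _ _ _ _ HI i j Hij) as [k [t [n [s [r [q [o [p [Hk [Ht [Hn Hj]]]]]]]]]]].
    exists k, (f (t, n, s, r)), p. rewrite nth_error_map, Hk. split; auto.
    unfold f, tinv, gi, gn, gr, gtm. simpl. rewrite Ht. auto.
Qed.

End PB.

Theorem mainTheorem2 (OP RES St : Type) (delta : St -> OP -> St -> RES -> Prop) (s0 : St)
  (tr : list (proc * option (ev OP RES))) (c : config OP RES St) :
  reach delta s0 tr c ->
  exists h', is_completion (history tr) h' /\ linearizable_conforming delta s0 h'.
Proof.
  exact (final OP RES St delta s0 tr c).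
Qed.
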